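(* For all $n\ge1$, $|\dot{\mathcal S}_n|=|\dot{\mathcal S}'_n|=3\cdot 2^{4n+1}$.
   Context: Let $\tau=(1+\sqrt5)/2$, $\tau'=(1-\sqrt5)/2$. Let $\mathbb F_4=\mathbb{Z}[\tau]/2\mathbb{Z}[\tau]$ (elements $\bar0,\bar1,\bar\tau,\bar{\tau'}$) and for $y\in\mathbb{Z}[\tau]^4$ let $\bar y\in\mathbb F_4^4$ be its coordinatewise reduction. Let $\dot A\subset\mathbb F_4^4$ be the 12 vectors obtained from $(\bar0,\bar1,\bar{\tau'},\bar\tau)$ by even permutations of coordinates and $\dot A'$ those obtained by odd permutations. For $n\ge1$, $\dot{\mathcal S}_n=\{x\in 2^{-n}\mathbb{Z}[\tau]^4: x\cdot x=1,\ \overline{2^nx}\in\dot A\}$ and $\dot{\mathcal S}'_n=\{x\in 2^{-n}\mathbb{Z}[\tau]^4: x\cdot x=1,\ \overline{2^nx}\in\dot A'\}$, where $\cdot$ is the standard dot product. *)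

(* Defs.v *)
From HB Require Import structures.
From mathcomp Require Import all_boot all_order all_algebra all_fingroup.
Set Implicit Arguments. Unset Strict Implicit. Unset Printing Implicit Defensive.
Import Order.TTheory GRing.Theory Num.Theory.
Local Open Scope ring_scope.

(* Q(tau) = Q(sqrt 5): the pair (a, b) represents a + b*tau, where
   tau = (1 + sqrt 5)/2 satisfies tau^2 = tau + 1.  Z[tau] is the
   subring of pairs of integers. *)
Definition qtau := (rat * rat)%type.

Definition qt_add (u v : qtau) : qtau := (u.1 + v.1, u.2 + v.2).
(* (a + b tau)(c + d tau) = (ac + bd) + (ad + bc + bd) tau *)
Definition qt_mul (u v : qtau) : qtau :=
  (u.1 * v.1 + u.2 * v.2, u.1 * v.2 + u.2 * v.1 + u.2 * v.2).
Definition qt_one : qtau := (1, 0).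

Definition vec4 := {ffun 'I_4 -> qtau}.

Definition dot (x y : vec4) : qtau :=
  foldr qt_add (0, 0) [seq qt_mul (x i) (y i) | i <- enum 'I_4].

Definition zvec4 := {ffun 'I_4 -> (int * int)%type}.

(* F_4 = Z[tau]/2Z[tau]; the class of a + b tau is (a mod 2, b mod 2),
   so 0 = (false,false), 1 = (true,false), tau = (false,true),
   tau' = 1 - tau = (true,true). *)
Definition F4 := (bool * bool)%type.
Definition F4_0 : F4 := (false, false).
Definition F4_1 : F4 := (true, false).
Definition F4_tau : F4 := (false, true).
Definition F4_tau' : F4 := (true, true).

Definition red (z : int * int) : F4 := (odd `|z.1|%N, odd `|z.2|%N).
Definition redv (y : zvec4) : 'I_4 -> F4 := fun i => red (y i).

Definition base4 : 'I_4 -> F4 :=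
  fun i => match val i with 0 => F4_0 | 1 => F4_1 | 2 => F4_tau' | _ => F4_tau end.

Definition dotA (w : 'I_4 -> F4) : Prop :=
  exists s : 'S_4, ~~ odd_perm s /\ forall i, w i = base4 (s i).
Definition dotA' (w : 'I_4 -> F4) : Prop :=
  exists s : 'S_4, odd_perm s /\ forall i, w i = base4 (s i).

Definition scaled (n : nat) (y : zvec4) (x : vec4) : Prop :=
  forall i, x i = ((y i).1%:~R / 2 ^+ n, (y i).2%:~R / 2 ^+ n).

Definition dotS (n : nat) (x : vec4) : Prop :=
  exists y : zvec4, scaled n y x /\ dot x x = qt_one /\ dotA (redv y).
Definition dotS' (n : nat) (x : vec4) : Prop :=
  exists y : zvec4, scaled n y x /\ dot x x = qt_one /\ dotA' (redv y).

Definition has_card (T : eqType) (P : T -> Prop) (k : nat) : Prop :=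
  exists s : seq T, uniq s /\ (forall x, P x <-> x \in s) /\ size s = k.

(* Main.v *)
From HB Require Import structures.
From mathcomp Require Import all_boot all_order all_algebra all_fingroup.
From mathcomp Require Import ring lra zify.
Require Import Defs.
Set Implicit Arguments. Unset Strict Implicit. Unset Printing Implicit Defensive.
Import Order.TTheory GRing.Theory Num.Theory.
Local Open Scope ring_scope.

Notation T8 R := (R * R * R * R * R * R * R * R)%type.
Definition mulR (R : comPzRingType) (c d : T8 R) : T8 R :=
  let '(c0, c1, c2, c3, c4, c5, c6, c7) := c in let '(d0, d1, d2, d3, d4, d5, d6, d7) := d in
  (- c0*d0 - c0*d1 - c0*d2 - c0*d3 - c0*d5 - c0*d6 - c0*d7 - c1*d0 - c1*d1 - c1*d2 - c1*d3 - c1*d4 - c1*d5 - c1*d6 - c2*d0 - c2*d1 - 2%:R*c2*d2 - c2*d3 - c2*d4 - c2*d5 - c2*d7 - c3*d0 - c3*d1 - c3*d2 - 2%:R*c3*d3 - c3*d4 - c3*d6 - c3*d7 - c4*d1 - c4*d2 - c4*d3 - 2%:R*c4*d4 - c5*d0 - c5*d1 - c5*d2 - 2%:R*c5*d5 - c6*d0 - c6*d1 - c6*d3 - 2%:R*c6*d6 - c7*d0 - c7*d2 - c7*d3 - 2%:R*c7*d7,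
   - 2%:R*c0*d0 - c0*d1 - 2%:R*c0*d2 - 2%:R*c0*d3 - c0*d4 - c0*d5 - c0*d6 - 2%:R*c0*d7 - c1*d0 - c1*d1 - 2%:R*c1*d2 - c1*d3 - c1*d4 - 2%:R*c1*d5 - c1*d7 - 2%:R*c2*d0 - 2%:R*c2*d1 - 2%:R*c2*d2 - 2%:R*c2*d3 - c2*d4 - 2%:R*c2*d5 - c2*d6 - c2*d7 - 2%:R*c3*d0 - c3*d1 - 2%:R*c3*d2 - 2%:R*c3*d3 - c3*d5 - c3*d6 - 2%:R*c3*d7 - c4*d0 - c4*d1 - c4*d2 - 2%:R*c4*d5 - c5*d0 - 2%:R*c5*d1 - 2%:R*c5*d2 - c5*d3 - 2%:R*c5*d4 - 2%:R*c5*d5 - c6*d0 - c6*d2 - c6*d3 - 2%:R*c6*d7 - 2%:R*c7*d0 - c7*d1 - c7*d2 - 2%:R*c7*d3 - 2%:R*c7*d6 - 2%:R*c7*d7,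
   - c0*d1 - c0*d4 - c0*d5 + c0*d7 + c1*d0 + c1*d3 - c1*d4 + c1*d6 + c1*d7 + c2*d0 + c2*d3 - c2*d5 + c2*d6 + c2*d7 - c3*d2 - c3*d4 - c3*d5 + c3*d6 + c4*d0 + c4*d1 + c4*d3 + 2%:R*c4*d6 + c5*d0 + c5*d2 + c5*d3 + 2%:R*c5*d7 - c6*d1 - c6*d2 - c6*d3 - 2%:R*c6*d4 - c7*d0 - c7*d1 - c7*d2 - 2%:R*c7*d5,
   - c0*d1 - c0*d2 + c0*d3 - c0*d4 - 2%:R*c0*d5 + c0*d6 + c0*d7 + c1*d0 + c1*d2 + 2%:R*c1*d3 - c1*d5 + c1*d6 + 2%:R*c1*d7 + c2*d0 + c2*d3 - c2*d4 - c2*d5 + c2*d6 + 2%:R*c2*d7 - c3*d1 - c3*d2 - c3*d4 - 2%:R*c3*d5 + c3*d7 + c4*d0 + c4*d2 + c4*d3 + 2%:R*c4*d7 + 2%:R*c5*d0 + c5*d1 + c5*d2 + 2%:R*c5*d3 + 2%:R*c5*d6 + 2%:R*c5*d7 - c6*d0 - c6*d1 - c6*d2 - 2%:R*c6*d5 - c7*d0 - 2%:R*c7*d1 - 2%:R*c7*d2 - c7*d3 - 2%:R*c7*d4 - 2%:R*c7*d5,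
   c0*d0 + 2%:R*c0*d1 + 2%:R*c0*d2 + c0*d3 + 2%:R*c0*d4 + 2%:R*c0*d5 + c1*d1 + c1*d2 - c1*d3 + c1*d4 + 2%:R*c1*d5 - c1*d6 - c1*d7 + c2*d1 + c2*d2 + c2*d4 + 2%:R*c2*d5 - c2*d6 - c2*d7 + c3*d0 + c3*d1 + 2%:R*c3*d2 + c3*d3 + c3*d4 + 2%:R*c3*d5 - c4*d3 + c4*d5 - c4*d6 - c4*d7 - c5*d0 + c5*d1 - c5*d3 + c5*d4 + c5*d5 - c5*d6 - 2%:R*c5*d7 + c6*d0 + c6*d1 + 2%:R*c6*d2 + c6*d3 + c6*d4 + c6*d5 + c6*d7 + 2%:R*c7*d0 + 2%:R*c7*d1 + 2%:R*c7*d2 + 2%:R*c7*d3 + c7*d4 + 2%:R*c7*d5 + c7*d6 + c7*d7,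
   2%:R*c0*d0 + 2%:R*c0*d1 + 2%:R*c0*d2 + 2%:R*c0*d3 + c0*d4 + 2%:R*c0*d5 + c0*d6 + c0*d7 + c1*d0 + 2%:R*c1*d1 + 2%:R*c1*d2 + c1*d3 + 2%:R*c1*d4 + 2%:R*c1*d5 + c2*d0 + 2%:R*c2*d1 + 2%:R*c2*d2 + c2*d3 + c2*d4 + 2%:R*c2*d5 + c3*d0 + c3*d1 + 2%:R*c3*d2 + 2%:R*c3*d3 + c3*d4 + c3*d5 + c3*d7 + c4*d1 + c4*d2 + c4*d4 + c4*d5 - c4*d6 + c5*d0 + 2%:R*c5*d1 + c5*d2 + c5*d4 + 2%:R*c5*d5 - c5*d7 + c6*d0 + c6*d1 + c6*d2 + 2%:R*c6*d3 + c6*d4 + c6*d6 + c6*d7 + 2%:R*c7*d0 + c7*d1 + 2%:R*c7*d2 + 2%:R*c7*d3 + c7*d5 + c7*d6 + 2%:R*c7*d7,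
   2%:R*c0*d0 + 2%:R*c0*d1 + 2%:R*c0*d2 + c0*d3 + c0*d4 + 2%:R*c0*d5 + c0*d6 + c0*d7 + c1*d0 + c1*d1 + c1*d2 + c1*d4 + 2%:R*c1*d5 + c2*d0 + 2%:R*c2*d1 + 2%:R*c2*d2 + c2*d3 + 2%:R*c2*d4 + 2%:R*c2*d5 + 2%:R*c3*d0 + 2%:R*c3*d1 + 2%:R*c3*d2 + 2%:R*c3*d3 + c3*d4 + 2%:R*c3*d5 + c3*d6 + c3*d7 + c4*d1 + c4*d4 + c4*d5 - c4*d7 + c5*d1 + c5*d2 - c5*d3 + c5*d4 + 2%:R*c5*d5 - c5*d6 - c5*d7 + 2%:R*c6*d0 + c6*d1 + c6*d2 + c6*d3 + c6*d5 + c6*d6 + c6*d7 + 2%:R*c7*d0 + 2%:R*c7*d1 + 2%:R*c7*d2 + 2%:R*c7*d3 + c7*d4 + c7*d5 + c7*d6 + 2%:R*c7*d7,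
   c0*d0 + 2%:R*c0*d1 + c0*d2 + c0*d4 + 2%:R*c0*d5 + c1*d1 - c1*d3 + c1*d4 + c1*d5 - c1*d7 + c2*d1 + c2*d2 - c2*d3 + c2*d4 + 2%:R*c2*d5 - c2*d6 - c2*d7 + c3*d0 + 2%:R*c3*d1 + 2%:R*c3*d2 + c3*d3 + 2%:R*c3*d4 + 2%:R*c3*d5 - c4*d0 - c4*d3 + c4*d4 - c4*d6 - c4*d7 - c5*d0 - c5*d2 - 2%:R*c5*d3 + c5*d5 - c5*d6 - 2%:R*c5*d7 + c6*d0 + 2%:R*c6*d1 + c6*d2 + c6*d3 + c6*d4 + c6*d5 + c6*d6 + 2%:R*c7*d0 + 2%:R*c7*d1 + 2%:R*c7*d2 + c7*d3 + c7*d4 + 2%:R*c7*d5 + c7*d7).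
Definition conjR (R : comPzRingType) (c : T8 R) : T8 R :=
  let '(c0, c1, c2, c3, c4, c5, c6, c7) := c in
  (c0,
   c1,
   - c2,
   - c3,
   - c1 - c4,
   - c0 - c1 - c5,
   - c0 - c1 - c6,
   - c0 - c7).
Definition tauR (R : comPzRingType) (c : T8 R) : T8 R :=
  let '(c0, c1, c2, c3, c4, c5, c6, c7) := c in
  (c1,
   c0 + c1,
   c3,
   c2 + c3,
   - c3 + c5,
   c2 + c4 + c5,
   - c1 + c7,
   c0 + c6 + c7).
Definition N1R (R : comPzRingType) (c : T8 R) : R :=
  let '(c0, c1, c2, c3, c4, c5, c6, c7) := c in
  c0*c1 + c0*c2 + c0*c3 + c0*c5 + c0*c6 + c0*c7 + c0*c0 + c1*c2 + c1*c3 + c1*c4 + c1*c5 + c1*c6 + c1*c1 + c2*c3 + c2*c4 + c2*c5 + c2*c7 + c2*c2 + c3*c4 + c3*c6 + c3*c7 + c3*c3 + c4*c4 + c5*c5 + c6*c6 + c7*c7.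
Definition N2R (R : comPzRingType) (c : T8 R) : R :=
  let '(c0, c1, c2, c3, c4, c5, c6, c7) := c in
  2%:R*c0*c1 + 2%:R*c0*c2 + 2%:R*c0*c3 + c0*c4 + c0*c5 + c0*c6 + 2%:R*c0*c7 + c0*c0 + 2%:R*c1*c2 + c1*c3 + c1*c4 + 2%:R*c1*c5 + c1*c7 + c1*c1 + 2%:R*c2*c3 + c2*c4 + 2%:R*c2*c5 + c2*c6 + c2*c7 + c2*c2 + c3*c5 + c3*c6 + 2%:R*c3*c7 + c3*c3 + 2%:R*c4*c5 + c5*c5 + 2%:R*c6*c7 + c7*c7.
Definition YofR (R : comPzRingType) (c : T8 R) : T8 R :=
  let '(c0, c1, c2, c3, c4, c5, c6, c7) := c in
  (c0, c1, c2, c3, c1 + c2 + c3 + 2%:R * c4, c0 + c1 + c2 + 2%:R * c5,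
   c0 + c1 + c3 + 2%:R * c6, c0 + c2 + c3 + 2%:R * c7).

Definition map8 (R S : Type) (f : R -> S) (c : T8 R) : T8 S :=
  let '(c0, c1, c2, c3, c4, c5, c6, c7) := c in
  (f c0, f c1, f c2, f c3, f c4, f c5, f c6, f c7).

Notation ic := (T8 int).
Notation cls := (T8 'F_2).
Definition cl (c : ic) : cls := map8 (fun x : int => (x%:~R : 'F_2)) c.
Definition zc : cls := (0, 0, 0, 0, 0, 0, 0, 0).
Definition sc (a : int) (c : ic) : ic := map8 (fun x => a * x) c.
Definition add8 (c d : ic) : ic :=
  let '(c0, c1, c2, c3, c4, c5, c6, c7) := c in
  let '(d0, d1, d2, d3, d4, d5, d6, d7) := d in
  (c0 + d0, c1 + d1, c2 + d2, c3 + d3, c4 + d4, c5 + d5, c6 + d6, c7 + d7).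
Definition dbl (c : ic) : ic := sc 2 c.
Definition hlf (c : ic) : ic := map8 (fun x => (x %/ 2)%Z) c.
Definition mul (c d : ic) : ic := mulR c d.
Definition cnj (c : ic) : ic := conjR c.
Definition NN (c : ic) : int * int := (N1R c, N2R c).

Lemma pair8_eq (T : Type) (a0 a1 a2 a3 a4 a5 a6 a7 b0 b1 b2 b3 b4 b5 b6 b7 : T) :
  a0 = b0 -> a1 = b1 -> a2 = b2 -> a3 = b3 -> a4 = b4 -> a5 = b5 -> a6 = b6 -> a7 = b7 ->
  (a0, a1, a2, a3, a4, a5, a6, a7) = (b0, b1, b2, b3, b4, b5, b6, b7).
Proof. by move=> -> -> -> -> -> -> -> ->. Qed.

Ltac d8 c := case: c => [[[[[[[? ?] ?] ?] ?] ?] ?] ?].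

Lemma mulR_morph (R S : comPzRingType) (f : {rmorphism R -> S}) (c d : T8 R) : map8 f (mulR c d) = mulR (map8 f c) (map8 f d).
Proof.
d8 c; d8 d; rewrite /=; apply: pair8_eq;
  by rewrite ?(rmorph_nat, rmorphD, rmorphB, rmorphN, rmorphM).
Qed.
Lemma conjR_morph (R S : comPzRingType) (f : {rmorphism R -> S}) (c : T8 R) : map8 f (conjR c) = conjR (map8 f c).
Proof.
d8 c; rewrite /=; apply: pair8_eq;
  by rewrite ?(rmorph_nat, rmorphD, rmorphB, rmorphN, rmorphM).
Qed.
Lemma YofR_morph (R S : comPzRingType) (f : {rmorphism R -> S}) (c : T8 R) : map8 f (YofR c) = YofR (map8 f c).
Proof.
d8 c; rewrite /=; apply: pair8_eq;
  by rewrite ?(rmorph_nat, rmorphD, rmorphB, rmorphN, rmorphM).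
Qed.
Lemma N1R_morph (R S : comPzRingType) (f : {rmorphism R -> S}) (c : T8 R) : f (N1R c) = N1R (map8 f c).
Proof. d8 c; by rewrite /= ?(rmorph_nat, rmorphD, rmorphB, rmorphN, rmorphM). Qed.
Lemma N2R_morph (R S : comPzRingType) (f : {rmorphism R -> S}) (c : T8 R) : f (N2R c) = N2R (map8 f c).
Proof. d8 c; by rewrite /= ?(rmorph_nat, rmorphD, rmorphB, rmorphN, rmorphM). Qed.

Lemma mul_conj (q p : ic) :
  mulR (mulR q p) (conjR p) = add8 (sc (N1R p) q) (sc (N2R p) (tauR q)).
Proof. d8 q; d8 p; rewrite /=; apply: pair8_eq; ring. Qed.

Lemma conjK (p : ic) : conjR (conjR p) = p.
Proof. d8 p; rewrite /=; apply: pair8_eq; ring. Qed.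

Lemma N1_conj (p : ic) : N1R (conjR p) = N1R p.
Proof. d8 p; rewrite /=; ring. Qed.
Lemma N2_conj (p : ic) : N2R (conjR p) = N2R p.
Proof. d8 p; rewrite /=; ring. Qed.

Lemma N1_mul (c d : ic) : N1R (mulR c d) = N1R c * N1R d + N2R c * N2R d.
Proof. d8 c; d8 d; rewrite /=; ring. Qed.
Lemma N2_mul (c d : ic) :
  N2R (mulR c d) = N1R c * N2R d + N2R c * N1R d + N2R c * N2R d.
Proof. d8 c; d8 d; rewrite /=; ring. Qed.

Lemma mul_dbl (q p : ic) : mulR (dbl q) p = dbl (mulR q p).
Proof. d8 q; d8 p; rewrite /=; apply: pair8_eq; ring. Qed.
Lemma N1_dbl (q : ic) : N1R (dbl q) = 4 * N1R q.
Proof. d8 q; rewrite /=; ring. Qed.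
Lemma N2_dbl (q : ic) : N2R (dbl q) = 4 * N2R q.
Proof. d8 q; rewrite /=; ring. Qed.

Lemma cl_mul (c d : ic) : cl (mulR c d) = mulR (cl c) (cl d).
Proof. exact: (mulR_morph (intr : {rmorphism int -> 'F_2})). Qed.
Lemma cl_conj (c : ic) : cl (conjR c) = conjR (cl c).
Proof. exact: (conjR_morph (intr : {rmorphism int -> 'F_2})). Qed.
Lemma cl_Y (c : ic) : cl (YofR c) = YofR (cl c).
Proof. exact: (YofR_morph (intr : {rmorphism int -> 'F_2})). Qed.
Lemma cl_N1 (c : ic) : (N1R c)%:~R = N1R (cl c) :> 'F_2.
Proof. exact: (N1R_morph (intr : {rmorphism int -> 'F_2})). Qed.
Lemma cl_N2 (c : ic) : (N2R c)%:~R = N2R (cl c) :> 'F_2.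
Proof. exact: (N2R_morph (intr : {rmorphism int -> 'F_2})). Qed.

Lemma char2F : (2%N \in [char 'F_2])%R.
Proof. exact: (pchar_Fp (isT : prime 2)). Qed.

Lemma F2_intr (x : int) : (x%:~R : 'F_2) = (odd `|x|%N)%:R.
Proof.
case: x => n.
  by rewrite -pmulrn -(Fp_nat_mod (isT : prime 2) n) modn2.
rewrite NegzE mulrNz oppr_char2 ?char2F // -pmulrn.
by rewrite -(Fp_nat_mod (isT : prime 2) n.+1) modn2.
Qed.

Lemma F2_eq0 (x : int) : ((x%:~R : 'F_2) == 0) = ~~ odd `|x|%N.
Proof. by rewrite F2_intr; case: (odd _). Qed.

Lemma even_half (x : int) : ~~ odd `|x|%N -> x = 2 * (x %/ 2)%Z.
Proof.
move=> h; rewrite mulrC divzK //.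
by rewrite dvdzE /= dvdn2.
Qed.

Lemma cl0 (w : ic) : cl w = zc -> w = dbl (hlf w).
Proof.
d8 w; rewrite /cl /zc /= => -[h0 h1 h2 h3 h4 h5 h6 h7].
by apply: pair8_eq; apply: even_half; rewrite -F2_eq0 ?h0 ?h1 ?h2 ?h3 ?h4 ?h5 ?h6 ?h7.
Qed.

Lemma cl_dbl (q : ic) : cl (dbl q) = zc.
Proof.
have h2 : (2%:R : 'F_2) = 0 by exact: (pchar_Fp_0 (isT : prime 2)).
d8 q; rewrite /cl /zc /dbl /sc /=; apply: pair8_eq;
  by rewrite intrM (_ : (2%:~R : 'F_2) = 2%:R) // h2 mul0r.
Qed.

Definition rng : seq int := [:: -2; -1; 0; 1; 2].
Fixpoint lists (n : nat) : seq (seq int) :=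
  if n is n'.+1 then flatten [seq [seq a :: l | l <- lists n'] | a <- rng] else [:: [::]].
Definition mk (l : seq int) : ic :=
  let n := nth 0 l in (n 0%N, n 1%N, n 2%N, n 3%N, n 4%N, n 5%N, n 6%N, n 7%N).
Definition box : seq ic := map mk (lists 8).
Definition G1lit : seq ic := [::
  ((-2), (0), (-2), (0), (1), (2), (1), (2));
  ((-2), (0), (-1), (0), (0), (2), (1), (1));
  ((-2), (0), (-1), (0), (0), (2), (1), (2));
  ((-2), (0), (-1), (0), (1), (1), (1), (1));
  ((-2), (0), (-1), (0), (1), (1), (1), (2));
  ((-2), (0), (-1), (1), (0), (1), (0), (1));
  ((-2), (0), (-1), (1), (0), (1), (1), (1));
  ((-2), (0), (-1), (1), (0), (2), (0), (1));
  ((-2), (0), (-1), (1), (0), (2), (1), (1));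
  ((-2), (0), (0), (-1), (0), (1), (1), (2));
  ((-2), (0), (0), (-1), (0), (1), (2), (1));
  ((-2), (0), (0), (-1), (1), (1), (1), (2));
  ((-2), (0), (0), (-1), (1), (1), (2), (1));
  ((-2), (0), (0), (0), (-1), (1), (1), (1));
  ((-2), (0), (0), (0), (0), (1), (0), (1));
  ((-2), (0), (0), (0), (0), (1), (2), (1));
  ((-2), (0), (0), (0), (1), (1), (1), (1));
  ((-2), (0), (0), (1), (-1), (1), (0), (1));
  ((-2), (0), (0), (1), (-1), (1), (1), (0));
  ((-2), (0), (0), (1), (0), (1), (0), (1));
  ((-2), (0), (0), (1), (0), (1), (1), (0));
  ((-2), (0), (1), (-1), (0), (0), (1), (1));
  ((-2), (0), (1), (-1), (0), (0), (2), (1));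
  ((-2), (0), (1), (-1), (0), (1), (1), (1));
  ((-2), (0), (1), (-1), (0), (1), (2), (1));
  ((-2), (0), (1), (0), (-1), (1), (1), (0));
  ((-2), (0), (1), (0), (-1), (1), (1), (1));
  ((-2), (0), (1), (0), (0), (0), (1), (0));
  ((-2), (0), (1), (0), (0), (0), (1), (1));
  ((-2), (0), (2), (0), (-1), (0), (1), (0));
  ((-2), (1), (-1), (-1), (0), (1), (1), (2));
  ((-2), (1), (-1), (-1), (1), (1), (1), (2));
  ((-2), (1), (-1), (0), (0), (1), (0), (1));
  ((-2), (1), (-1), (0), (0), (1), (1), (2));
  ((-2), (1), (0), (-1), (0), (0), (1), (1));
  ((-2), (1), (0), (-1), (0), (0), (1), (2));
  ((-2), (1), (0), (-1), (0), (1), (1), (1));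
  ((-2), (1), (0), (-1), (0), (1), (1), (2));
  ((-2), (1), (0), (0), (-1), (0), (0), (1));
  ((-2), (1), (0), (0), (-1), (0), (1), (1));
  ((-2), (1), (0), (0), (0), (1), (0), (1));
  ((-2), (1), (0), (0), (0), (1), (1), (1));
  ((-2), (1), (0), (1), (-1), (0), (0), (0));
  ((-2), (1), (0), (1), (-1), (0), (0), (1));
  ((-2), (1), (0), (1), (-1), (1), (0), (0));
  ((-2), (1), (0), (1), (-1), (1), (0), (1));
  ((-2), (1), (1), (0), (-1), (0), (0), (0));
  ((-2), (1), (1), (0), (-1), (0), (1), (1));
  ((-2), (1), (1), (1), (-2), (0), (0), (0));
  ((-2), (1), (1), (1), (-1), (0), (0), (0));
  ((-1), (-1), (-2), (1), (1), (2), (0), (1));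
  ((-1), (-1), (-2), (1), (1), (2), (1), (1));
  ((-1), (-1), (-1), (0), (0), (2), (1), (1));
  ((-1), (-1), (-1), (0), (2), (1), (1), (1));
  ((-1), (-1), (-1), (1), (0), (2), (0), (1));
  ((-1), (-1), (-1), (1), (0), (2), (1), (0));
  ((-1), (-1), (-1), (1), (1), (1), (0), (1));
  ((-1), (-1), (-1), (1), (1), (1), (1), (0));
  ((-1), (-1), (0), (0), (0), (1), (0), (1));
  ((-1), (-1), (0), (0), (0), (1), (2), (0));
  ((-1), (-1), (0), (0), (1), (1), (0), (1));
  ((-1), (-1), (0), (0), (1), (1), (2), (0));
  ((-1), (-1), (1), (-1), (0), (1), (1), (1));
  ((-1), (-1), (1), (-1), (0), (1), (2), (0));
  ((-1), (-1), (1), (-1), (1), (0), (1), (1));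
  ((-1), (-1), (1), (-1), (1), (0), (2), (0));
  ((-1), (-1), (1), (0), (-1), (1), (1), (0));
  ((-1), (-1), (1), (0), (1), (0), (1), (0));
  ((-1), (-1), (2), (-1), (0), (0), (1), (0));
  ((-1), (-1), (2), (-1), (0), (0), (2), (0));
  ((-1), (0), (-2), (0), (1), (1), (0), (2));
  ((-1), (0), (-2), (0), (1), (1), (1), (1));
  ((-1), (0), (-2), (0), (1), (2), (0), (2));
  ((-1), (0), (-2), (0), (1), (2), (1), (1));
  ((-1), (0), (-2), (1), (0), (1), (0), (1));
  ((-1), (0), (-2), (1), (1), (2), (0), (1));
  ((-1), (0), (-1), (-1), (1), (1), (0), (2));
  ((-1), (0), (-1), (-1), (1), (1), (2), (1));
  ((-1), (0), (-1), (0), (0), (1), (0), (2));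
  ((-1), (0), (-1), (0), (0), (1), (1), (0));
  ((-1), (0), (-1), (0), (0), (2), (0), (1));
  ((-1), (0), (-1), (0), (0), (2), (1), (1));
  ((-1), (0), (-1), (0), (1), (0), (0), (1));
  ((-1), (0), (-1), (0), (1), (0), (1), (1));
  ((-1), (0), (-1), (0), (1), (1), (0), (2));
  ((-1), (0), (-1), (0), (1), (1), (1), (0));
  ((-1), (0), (-1), (1), (-1), (1), (0), (0));
  ((-1), (0), (-1), (1), (-1), (1), (0), (1));
  ((-1), (0), (-1), (1), (1), (1), (0), (0));
  ((-1), (0), (-1), (1), (1), (1), (0), (1));
  ((-1), (0), (-1), (2), (-1), (1), (-1), (0));
  ((-1), (0), (-1), (2), (-1), (1), (0), (0));
  ((-1), (0), (-1), (2), (0), (1), (-1), (0));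
  ((-1), (0), (-1), (2), (0), (1), (0), (0));
  ((-1), (0), (0), (-1), (0), (1), (0), (1));
  ((-1), (0), (0), (-1), (0), (1), (2), (1));
  ((-1), (0), (0), (-1), (1), (0), (0), (1));
  ((-1), (0), (0), (-1), (1), (0), (2), (1));
  ((-1), (0), (0), (0), (-1), (1), (0), (0));
  ((-1), (0), (0), (0), (-1), (1), (1), (1));
  ((-1), (0), (0), (0), (1), (0), (0), (0));
  ((-1), (0), (0), (0), (1), (0), (1), (1));
  ((-1), (0), (0), (1), (-1), (1), (-1), (0));
  ((-1), (0), (0), (1), (-1), (1), (1), (0));
  ((-1), (0), (0), (1), (0), (0), (-1), (0));
  ((-1), (0), (0), (1), (0), (0), (1), (0));
  ((-1), (0), (1), (-2), (0), (0), (1), (1));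
  ((-1), (0), (1), (-2), (0), (0), (2), (1));
  ((-1), (0), (1), (-2), (1), (0), (1), (1));
  ((-1), (0), (1), (-2), (1), (0), (2), (1));
  ((-1), (0), (1), (-1), (-1), (0), (1), (0));
  ((-1), (0), (1), (-1), (-1), (0), (1), (1));
  ((-1), (0), (1), (-1), (1), (0), (1), (0));
  ((-1), (0), (1), (-1), (1), (0), (1), (1));
  ((-1), (0), (1), (0), (-1), (0), (0), (1));
  ((-1), (0), (1), (0), (-1), (0), (1), (-1));
  ((-1), (0), (1), (0), (-1), (1), (0), (0));
  ((-1), (0), (1), (0), (-1), (1), (1), (0));
  ((-1), (0), (1), (0), (0), (-1), (0), (0));
  ((-1), (0), (1), (0), (0), (-1), (1), (0));
  ((-1), (0), (1), (0), (0), (0), (0), (1));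
  ((-1), (0), (1), (0), (0), (0), (1), (-1));
  ((-1), (0), (1), (1), (-1), (0), (-1), (0));
  ((-1), (0), (1), (1), (-1), (0), (1), (-1));
  ((-1), (0), (2), (-1), (-1), (-1), (1), (0));
  ((-1), (0), (2), (-1), (0), (0), (1), (0));
  ((-1), (0), (2), (0), (-1), (-1), (0), (0));
  ((-1), (0), (2), (0), (-1), (-1), (1), (-1));
  ((-1), (0), (2), (0), (-1), (0), (0), (0));
  ((-1), (0), (2), (0), (-1), (0), (1), (-1));
  ((-1), (1), (-2), (0), (0), (1), (0), (1));
  ((-1), (1), (-2), (0), (0), (1), (0), (2));
  ((-1), (1), (-2), (0), (1), (1), (0), (1));
  ((-1), (1), (-2), (0), (1), (1), (0), (2));
  ((-1), (1), (-1), (-1), (0), (1), (0), (2));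
  ((-1), (1), (-1), (-1), (0), (1), (1), (1));
  ((-1), (1), (-1), (-1), (1), (0), (0), (2));
  ((-1), (1), (-1), (-1), (1), (0), (1), (1));
  ((-1), (1), (-1), (0), (0), (0), (-1), (1));
  ((-1), (1), (-1), (0), (0), (0), (1), (1));
  ((-1), (1), (-1), (0), (0), (1), (-1), (1));
  ((-1), (1), (-1), (0), (0), (1), (1), (1));
  ((-1), (1), (-1), (1), (-1), (0), (-1), (1));
  ((-1), (1), (-1), (1), (-1), (0), (0), (0));
  ((-1), (1), (-1), (1), (-1), (1), (-1), (0));
  ((-1), (1), (-1), (1), (-1), (1), (0), (1));
  ((-1), (1), (-1), (1), (0), (0), (-1), (0));
  ((-1), (1), (-1), (1), (0), (0), (0), (1));
  ((-1), (1), (-1), (1), (0), (1), (-1), (1));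
  ((-1), (1), (-1), (1), (0), (1), (0), (0));
  ((-1), (1), (-1), (2), (-1), (0), (-1), (0));
  ((-1), (1), (-1), (2), (-1), (1), (-1), (0));
  ((-1), (1), (0), (-1), (-1), (0), (0), (1));
  ((-1), (1), (0), (-1), (-1), (0), (1), (1));
  ((-1), (1), (0), (-1), (0), (0), (0), (2));
  ((-1), (1), (0), (-1), (0), (0), (1), (0));
  ((-1), (1), (0), (-1), (1), (0), (0), (1));
  ((-1), (1), (0), (-1), (1), (0), (1), (1));
  ((-1), (1), (0), (0), (-1), (1), (0), (0));
  ((-1), (1), (0), (0), (-1), (1), (0), (1));
  ((-1), (1), (0), (0), (0), (-1), (0), (0));
  ((-1), (1), (0), (0), (0), (-1), (0), (1));
  ((-1), (1), (0), (1), (-2), (0), (-1), (0));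
  ((-1), (1), (0), (1), (-2), (0), (0), (0));
  ((-1), (1), (0), (1), (-1), (0), (-1), (1));
  ((-1), (1), (0), (1), (-1), (0), (0), (-1));
  ((-1), (1), (0), (1), (0), (0), (-1), (0));
  ((-1), (1), (0), (1), (0), (0), (0), (0));
  ((-1), (1), (1), (-2), (0), (-1), (1), (1));
  ((-1), (1), (1), (-2), (0), (0), (1), (1));
  ((-1), (1), (1), (-1), (-1), (-1), (0), (1));
  ((-1), (1), (1), (-1), (-1), (-1), (1), (0));
  ((-1), (1), (1), (-1), (-1), (0), (0), (0));
  ((-1), (1), (1), (-1), (-1), (0), (1), (1));
  ((-1), (1), (1), (-1), (0), (-1), (0), (0));
  ((-1), (1), (1), (-1), (0), (-1), (1), (1));
  ((-1), (1), (1), (-1), (0), (0), (0), (1));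
  ((-1), (1), (1), (-1), (0), (0), (1), (0));
  ((-1), (1), (1), (0), (-1), (-1), (-1), (0));
  ((-1), (1), (1), (0), (-1), (-1), (1), (0));
  ((-1), (1), (1), (0), (-1), (0), (-1), (0));
  ((-1), (1), (1), (0), (-1), (0), (1), (0));
  ((-1), (1), (1), (1), (-2), (0), (-1), (0));
  ((-1), (1), (1), (1), (-2), (0), (0), (-1));
  ((-1), (1), (1), (1), (-1), (-1), (-1), (0));
  ((-1), (1), (1), (1), (-1), (-1), (0), (-1));
  ((-1), (1), (2), (0), (-2), (-1), (0), (-1));
  ((-1), (1), (2), (0), (-2), (-1), (0), (0));
  ((-1), (1), (2), (0), (-1), (-1), (0), (-1));
  ((-1), (1), (2), (0), (-1), (-1), (0), (0));
  ((-1), (2), (-1), (0), (-1), (0), (-1), (1));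
  ((-1), (2), (-1), (0), (-1), (0), (0), (1));
  ((-1), (2), (-1), (0), (0), (0), (-1), (1));
  ((-1), (2), (-1), (0), (0), (0), (0), (1));
  ((-1), (2), (-1), (1), (-1), (0), (-1), (0));
  ((-1), (2), (-1), (1), (-1), (0), (-1), (1));
  ((-1), (2), (0), (-1), (-1), (0), (0), (1));
  ((-1), (2), (0), (-1), (0), (-1), (0), (1));
  ((-1), (2), (0), (0), (-1), (-1), (-1), (1));
  ((-1), (2), (0), (0), (-1), (-1), (0), (0));
  ((-1), (2), (0), (0), (-1), (0), (-1), (1));
  ((-1), (2), (0), (0), (-1), (0), (0), (0));
  ((-1), (2), (0), (1), (-2), (0), (-1), (0));
  ((-1), (2), (0), (1), (-1), (-1), (-1), (0));
  ((-1), (2), (1), (-1), (-1), (-1), (0), (0));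
  ((-1), (2), (1), (-1), (-1), (-1), (0), (1));
  ((-1), (2), (1), (0), (-2), (-1), (-1), (0));
  ((-1), (2), (1), (0), (-2), (-1), (0), (0));
  ((-1), (2), (1), (0), (-1), (-1), (-1), (0));
  ((-1), (2), (1), (0), (-1), (-1), (0), (0));
  ((0), (-1), (-2), (0), (1), (2), (0), (1));
  ((0), (-1), (-2), (0), (1), (2), (1), (1));
  ((0), (-1), (-2), (0), (2), (1), (0), (1));
  ((0), (-1), (-2), (0), (2), (1), (1), (1));
  ((0), (-1), (-2), (1), (1), (1), (0), (0));
  ((0), (-1), (-2), (1), (1), (1), (0), (1));
  ((0), (-1), (-2), (1), (1), (2), (0), (0));
  ((0), (-1), (-2), (1), (1), (2), (0), (1));
  ((0), (-1), (-1), (0), (0), (1), (0), (1));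
  ((0), (-1), (-1), (0), (0), (1), (1), (0));
  ((0), (-1), (-1), (0), (2), (1), (0), (1));
  ((0), (-1), (-1), (0), (2), (1), (1), (0));
  ((0), (-1), (-1), (1), (0), (1), (-1), (0));
  ((0), (-1), (-1), (1), (0), (1), (1), (0));
  ((0), (-1), (-1), (1), (0), (2), (0), (0));
  ((0), (-1), (-1), (1), (1), (0), (0), (0));
  ((0), (-1), (-1), (1), (1), (1), (-1), (0));
  ((0), (-1), (-1), (1), (1), (1), (1), (0));
  ((0), (-1), (-1), (2), (0), (1), (-1), (0));
  ((0), (-1), (-1), (2), (0), (1), (0), (-1));
  ((0), (-1), (0), (-1), (0), (1), (1), (0));
  ((0), (-1), (0), (-1), (0), (1), (1), (1));
  ((0), (-1), (0), (-1), (1), (0), (0), (1));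
  ((0), (-1), (0), (-1), (1), (0), (2), (0));
  ((0), (-1), (0), (-1), (1), (1), (0), (1));
  ((0), (-1), (0), (-1), (1), (1), (2), (0));
  ((0), (-1), (0), (-1), (2), (0), (1), (0));
  ((0), (-1), (0), (-1), (2), (0), (1), (1));
  ((0), (-1), (0), (0), (0), (1), (0), (1));
  ((0), (-1), (0), (0), (0), (1), (1), (-1));
  ((0), (-1), (0), (0), (1), (0), (0), (1));
  ((0), (-1), (0), (0), (1), (0), (1), (-1));
  ((0), (-1), (0), (1), (-1), (1), (0), (-1));
  ((0), (-1), (0), (1), (-1), (1), (0), (0));
  ((0), (-1), (0), (1), (0), (0), (-1), (0));
  ((0), (-1), (0), (1), (0), (0), (1), (-1));
  ((0), (-1), (0), (1), (0), (1), (-1), (0));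
  ((0), (-1), (0), (1), (0), (1), (1), (-1));
  ((0), (-1), (0), (1), (1), (0), (0), (-1));
  ((0), (-1), (0), (1), (1), (0), (0), (0));
  ((0), (-1), (1), (-2), (1), (0), (1), (1));
  ((0), (-1), (1), (-2), (1), (0), (2), (0));
  ((0), (-1), (1), (-1), (0), (0), (0), (0));
  ((0), (-1), (1), (-1), (0), (0), (2), (0));
  ((0), (-1), (1), (-1), (0), (1), (1), (0));
  ((0), (-1), (1), (-1), (1), (-1), (1), (0));
  ((0), (-1), (1), (-1), (1), (0), (0), (0));
  ((0), (-1), (1), (-1), (1), (0), (2), (0));
  ((0), (-1), (1), (0), (-1), (0), (0), (0));
  ((0), (-1), (1), (0), (-1), (0), (1), (-1));
  ((0), (-1), (1), (0), (1), (0), (0), (0));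
  ((0), (-1), (1), (0), (1), (0), (1), (-1));
  ((0), (-1), (2), (-1), (0), (-1), (1), (-1));
  ((0), (-1), (2), (-1), (0), (-1), (1), (0));
  ((0), (-1), (2), (-1), (0), (0), (1), (-1));
  ((0), (-1), (2), (-1), (0), (0), (1), (0));
  ((0), (-1), (2), (0), (-1), (0), (0), (-1));
  ((0), (-1), (2), (0), (-1), (0), (1), (-1));
  ((0), (-1), (2), (0), (0), (-1), (0), (-1));
  ((0), (-1), (2), (0), (0), (-1), (1), (-1));
  ((0), (0), (-2), (0), (0), (1), (0), (1));
  ((0), (0), (-2), (0), (1), (1), (-1), (1));
  ((0), (0), (-2), (0), (1), (1), (1), (1));
  ((0), (0), (-2), (0), (2), (1), (0), (1));
  ((0), (0), (-2), (1), (0), (1), (-1), (0));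
  ((0), (0), (-2), (1), (0), (1), (0), (1));
  ((0), (0), (-2), (1), (1), (1), (-1), (0));
  ((0), (0), (-2), (1), (1), (1), (0), (1));
  ((0), (0), (-1), (-1), (0), (1), (0), (1));
  ((0), (0), (-1), (-1), (0), (1), (1), (1));
  ((0), (0), (-1), (-1), (2), (0), (0), (1));
  ((0), (0), (-1), (-1), (2), (0), (1), (1));
  ((0), (0), (-1), (0), (0), (0), (-1), (1));
  ((0), (0), (-1), (0), (0), (0), (1), (0));
  ((0), (0), (-1), (0), (1), (1), (-1), (1));
  ((0), (0), (-1), (0), (1), (1), (1), (0));
  ((0), (0), (-1), (1), (0), (0), (-1), (1));
  ((0), (0), (-1), (1), (0), (0), (0), (-1));
  ((0), (0), (-1), (1), (0), (1), (-1), (1));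
  ((0), (0), (-1), (1), (0), (1), (0), (-1));
  ((0), (0), (-1), (2), (-1), (1), (-1), (-1));
  ((0), (0), (-1), (2), (-1), (1), (-1), (0));
  ((0), (0), (-1), (2), (0), (0), (-1), (-1));
  ((0), (0), (-1), (2), (0), (0), (-1), (0));
  ((0), (0), (0), (-1), (0), (1), (0), (1));
  ((0), (0), (0), (-1), (0), (1), (1), (0));
  ((0), (0), (0), (-1), (1), (-1), (0), (1));
  ((0), (0), (0), (-1), (1), (-1), (1), (0));
  ((0), (0), (0), (0), (-1), (0), (-1), (0));
  ((0), (0), (0), (0), (-1), (0), (1), (0));
  ((0), (0), (0), (0), (1), (0), (-1), (0));
  ((0), (0), (0), (0), (1), (0), (1), (0));
  ((0), (0), (0), (1), (-1), (1), (-1), (0));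
  ((0), (0), (0), (1), (-1), (1), (0), (-1));
  ((0), (0), (0), (1), (0), (-1), (-1), (0));
  ((0), (0), (0), (1), (0), (-1), (0), (-1));
  ((0), (0), (1), (-2), (0), (0), (1), (0));
  ((0), (0), (1), (-2), (0), (0), (1), (1));
  ((0), (0), (1), (-2), (1), (-1), (1), (0));
  ((0), (0), (1), (-2), (1), (-1), (1), (1));
  ((0), (0), (1), (-1), (0), (-1), (0), (1));
  ((0), (0), (1), (-1), (0), (-1), (1), (-1));
  ((0), (0), (1), (-1), (0), (0), (0), (1));
  ((0), (0), (1), (-1), (0), (0), (1), (-1));
  ((0), (0), (1), (0), (-1), (-1), (-1), (0));
  ((0), (0), (1), (0), (-1), (-1), (1), (-1));
  ((0), (0), (1), (0), (0), (0), (-1), (0));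
  ((0), (0), (1), (0), (0), (0), (1), (-1));
  ((0), (0), (1), (1), (-2), (0), (-1), (-1));
  ((0), (0), (1), (1), (-2), (0), (0), (-1));
  ((0), (0), (1), (1), (0), (-1), (-1), (-1));
  ((0), (0), (1), (1), (0), (-1), (0), (-1));
  ((0), (0), (2), (-1), (-1), (-1), (0), (-1));
  ((0), (0), (2), (-1), (-1), (-1), (1), (0));
  ((0), (0), (2), (-1), (0), (-1), (0), (-1));
  ((0), (0), (2), (-1), (0), (-1), (1), (0));
  ((0), (0), (2), (0), (-2), (-1), (0), (-1));
  ((0), (0), (2), (0), (-1), (-1), (-1), (-1));
  ((0), (0), (2), (0), (-1), (-1), (1), (-1));
  ((0), (0), (2), (0), (0), (-1), (0), (-1));
  ((0), (1), (-2), (0), (0), (1), (-1), (1));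
  ((0), (1), (-2), (0), (0), (1), (0), (1));
  ((0), (1), (-2), (0), (1), (0), (-1), (1));
  ((0), (1), (-2), (0), (1), (0), (0), (1));
  ((0), (1), (-2), (1), (0), (0), (-1), (0));
  ((0), (1), (-2), (1), (0), (0), (-1), (1));
  ((0), (1), (-2), (1), (0), (1), (-1), (0));
  ((0), (1), (-2), (1), (0), (1), (-1), (1));
  ((0), (1), (-1), (0), (-1), (0), (-1), (1));
  ((0), (1), (-1), (0), (-1), (0), (0), (0));
  ((0), (1), (-1), (0), (1), (0), (-1), (1));
  ((0), (1), (-1), (0), (1), (0), (0), (0));
  ((0), (1), (-1), (1), (-1), (0), (-2), (0));
  ((0), (1), (-1), (1), (-1), (0), (0), (0));
  ((0), (1), (-1), (1), (-1), (1), (-1), (0));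
  ((0), (1), (-1), (1), (0), (-1), (-1), (0));
  ((0), (1), (-1), (1), (0), (0), (-2), (0));
  ((0), (1), (-1), (1), (0), (0), (0), (0));
  ((0), (1), (-1), (2), (-1), (0), (-2), (0));
  ((0), (1), (-1), (2), (-1), (0), (-1), (-1));
  ((0), (1), (0), (-1), (-1), (0), (0), (0));
  ((0), (1), (0), (-1), (-1), (0), (0), (1));
  ((0), (1), (0), (-1), (0), (-1), (-1), (1));
  ((0), (1), (0), (-1), (0), (-1), (1), (0));
  ((0), (1), (0), (-1), (0), (0), (-1), (1));
  ((0), (1), (0), (-1), (0), (0), (1), (0));
  ((0), (1), (0), (-1), (1), (-1), (0), (0));
  ((0), (1), (0), (-1), (1), (-1), (0), (1));
  ((0), (1), (0), (0), (-1), (0), (-1), (1));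
  ((0), (1), (0), (0), (-1), (0), (0), (-1));
  ((0), (1), (0), (0), (0), (-1), (-1), (1));
  ((0), (1), (0), (0), (0), (-1), (0), (-1));
  ((0), (1), (0), (1), (-2), (0), (-1), (-1));
  ((0), (1), (0), (1), (-2), (0), (-1), (0));
  ((0), (1), (0), (1), (-1), (-1), (-2), (0));
  ((0), (1), (0), (1), (-1), (-1), (0), (-1));
  ((0), (1), (0), (1), (-1), (0), (-2), (0));
  ((0), (1), (0), (1), (-1), (0), (0), (-1));
  ((0), (1), (0), (1), (0), (-1), (-1), (-1));
  ((0), (1), (0), (1), (0), (-1), (-1), (0));
  ((0), (1), (1), (-2), (0), (-1), (0), (1));
  ((0), (1), (1), (-2), (0), (-1), (1), (0));
  ((0), (1), (1), (-1), (-1), (-1), (-1), (0));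
  ((0), (1), (1), (-1), (-1), (-1), (1), (0));
  ((0), (1), (1), (-1), (-1), (0), (0), (0));
  ((0), (1), (1), (-1), (0), (-2), (0), (0));
  ((0), (1), (1), (-1), (0), (-1), (-1), (0));
  ((0), (1), (1), (-1), (0), (-1), (1), (0));
  ((0), (1), (1), (0), (-2), (-1), (-1), (0));
  ((0), (1), (1), (0), (-2), (-1), (0), (-1));
  ((0), (1), (1), (0), (0), (-1), (-1), (0));
  ((0), (1), (1), (0), (0), (-1), (0), (-1));
  ((0), (1), (2), (-1), (-1), (-2), (0), (-1));
  ((0), (1), (2), (-1), (-1), (-2), (0), (0));
  ((0), (1), (2), (-1), (-1), (-1), (0), (-1));
  ((0), (1), (2), (-1), (-1), (-1), (0), (0));
  ((0), (1), (2), (0), (-2), (-1), (-1), (-1));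
  ((0), (1), (2), (0), (-2), (-1), (0), (-1));
  ((0), (1), (2), (0), (-1), (-2), (-1), (-1));
  ((0), (1), (2), (0), (-1), (-2), (0), (-1));
  ((1), (-2), (-1), (0), (1), (1), (0), (0));
  ((1), (-2), (-1), (0), (1), (1), (1), (0));
  ((1), (-2), (-1), (0), (2), (1), (0), (0));
  ((1), (-2), (-1), (0), (2), (1), (1), (0));
  ((1), (-2), (-1), (1), (1), (1), (0), (-1));
  ((1), (-2), (-1), (1), (1), (1), (0), (0));
  ((1), (-2), (0), (-1), (1), (1), (1), (0));
  ((1), (-2), (0), (-1), (2), (0), (1), (0));
  ((1), (-2), (0), (0), (1), (0), (0), (0));
  ((1), (-2), (0), (0), (1), (0), (1), (-1));
  ((1), (-2), (0), (0), (1), (1), (0), (0));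
  ((1), (-2), (0), (0), (1), (1), (1), (-1));
  ((1), (-2), (0), (1), (0), (1), (0), (-1));
  ((1), (-2), (0), (1), (1), (0), (0), (-1));
  ((1), (-2), (1), (-1), (1), (0), (1), (-1));
  ((1), (-2), (1), (-1), (1), (0), (1), (0));
  ((1), (-2), (1), (0), (0), (0), (0), (-1));
  ((1), (-2), (1), (0), (0), (0), (1), (-1));
  ((1), (-2), (1), (0), (1), (0), (0), (-1));
  ((1), (-2), (1), (0), (1), (0), (1), (-1));
  ((1), (-1), (-2), (0), (1), (1), (0), (0));
  ((1), (-1), (-2), (0), (1), (1), (0), (1));
  ((1), (-1), (-2), (0), (2), (1), (0), (0));
  ((1), (-1), (-2), (0), (2), (1), (0), (1));
  ((1), (-1), (-1), (-1), (1), (1), (0), (1));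
  ((1), (-1), (-1), (-1), (1), (1), (1), (0));
  ((1), (-1), (-1), (-1), (2), (0), (0), (1));
  ((1), (-1), (-1), (-1), (2), (0), (1), (0));
  ((1), (-1), (-1), (0), (1), (0), (-1), (0));
  ((1), (-1), (-1), (0), (1), (0), (1), (0));
  ((1), (-1), (-1), (0), (1), (1), (-1), (0));
  ((1), (-1), (-1), (0), (1), (1), (1), (0));
  ((1), (-1), (-1), (1), (0), (0), (-1), (0));
  ((1), (-1), (-1), (1), (0), (0), (0), (-1));
  ((1), (-1), (-1), (1), (0), (1), (-1), (-1));
  ((1), (-1), (-1), (1), (0), (1), (0), (0));
  ((1), (-1), (-1), (1), (1), (0), (-1), (-1));
  ((1), (-1), (-1), (1), (1), (0), (0), (0));
  ((1), (-1), (-1), (1), (1), (1), (-1), (0));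
  ((1), (-1), (-1), (1), (1), (1), (0), (-1));
  ((1), (-1), (-1), (2), (0), (0), (-1), (-1));
  ((1), (-1), (-1), (2), (0), (1), (-1), (-1));
  ((1), (-1), (0), (-1), (0), (0), (0), (0));
  ((1), (-1), (0), (-1), (0), (0), (1), (0));
  ((1), (-1), (0), (-1), (1), (0), (0), (1));
  ((1), (-1), (0), (-1), (1), (0), (1), (-1));
  ((1), (-1), (0), (-1), (2), (0), (0), (0));
  ((1), (-1), (0), (-1), (2), (0), (1), (0));
  ((1), (-1), (0), (0), (0), (1), (0), (-1));
  ((1), (-1), (0), (0), (0), (1), (0), (0));
  ((1), (-1), (0), (0), (1), (-1), (0), (-1));
  ((1), (-1), (0), (0), (1), (-1), (0), (0));
  ((1), (-1), (0), (1), (-1), (0), (-1), (-1));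
  ((1), (-1), (0), (1), (-1), (0), (0), (-1));
  ((1), (-1), (0), (1), (0), (0), (-1), (0));
  ((1), (-1), (0), (1), (0), (0), (0), (-2));
  ((1), (-1), (0), (1), (1), (0), (-1), (-1));
  ((1), (-1), (0), (1), (1), (0), (0), (-1));
  ((1), (-1), (1), (-2), (1), (-1), (1), (0));
  ((1), (-1), (1), (-2), (1), (0), (1), (0));
  ((1), (-1), (1), (-1), (0), (-1), (0), (0));
  ((1), (-1), (1), (-1), (0), (-1), (1), (-1));
  ((1), (-1), (1), (-1), (0), (0), (0), (-1));
  ((1), (-1), (1), (-1), (0), (0), (1), (0));
  ((1), (-1), (1), (-1), (1), (-1), (0), (-1));
  ((1), (-1), (1), (-1), (1), (-1), (1), (0));
  ((1), (-1), (1), (-1), (1), (0), (0), (0));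
  ((1), (-1), (1), (-1), (1), (0), (1), (-1));
  ((1), (-1), (1), (0), (0), (-1), (-1), (-1));
  ((1), (-1), (1), (0), (0), (-1), (1), (-1));
  ((1), (-1), (1), (0), (0), (0), (-1), (-1));
  ((1), (-1), (1), (0), (0), (0), (1), (-1));
  ((1), (-1), (1), (1), (-1), (0), (-1), (-1));
  ((1), (-1), (1), (1), (-1), (0), (0), (-2));
  ((1), (-1), (1), (1), (0), (-1), (-1), (-1));
  ((1), (-1), (1), (1), (0), (-1), (0), (-2));
  ((1), (-1), (2), (0), (-1), (-1), (0), (-2));
  ((1), (-1), (2), (0), (-1), (-1), (0), (-1));
  ((1), (-1), (2), (0), (0), (-1), (0), (-2));
  ((1), (-1), (2), (0), (0), (-1), (0), (-1));
  ((1), (0), (-2), (0), (1), (0), (-1), (1));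
  ((1), (0), (-2), (0), (1), (0), (0), (0));
  ((1), (0), (-2), (0), (1), (1), (-1), (1));
  ((1), (0), (-2), (0), (1), (1), (0), (0));
  ((1), (0), (-2), (1), (0), (0), (-1), (0));
  ((1), (0), (-2), (1), (1), (1), (-1), (0));
  ((1), (0), (-1), (-1), (1), (0), (-1), (1));
  ((1), (0), (-1), (-1), (1), (0), (1), (0));
  ((1), (0), (-1), (0), (0), (0), (-1), (1));
  ((1), (0), (-1), (0), (0), (0), (0), (-1));
  ((1), (0), (-1), (0), (0), (1), (-1), (0));
  ((1), (0), (-1), (0), (0), (1), (0), (0));
  ((1), (0), (-1), (0), (1), (-1), (-1), (0));
  ((1), (0), (-1), (0), (1), (-1), (0), (0));
  ((1), (0), (-1), (0), (1), (0), (-1), (1));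
  ((1), (0), (-1), (0), (1), (0), (0), (-1));
  ((1), (0), (-1), (1), (-1), (0), (-1), (-1));
  ((1), (0), (-1), (1), (-1), (0), (-1), (0));
  ((1), (0), (-1), (1), (1), (0), (-1), (-1));
  ((1), (0), (-1), (1), (1), (0), (-1), (0));
  ((1), (0), (-1), (2), (-1), (0), (-2), (-1));
  ((1), (0), (-1), (2), (-1), (0), (-1), (-1));
  ((1), (0), (-1), (2), (0), (0), (-2), (-1));
  ((1), (0), (-1), (2), (0), (0), (-1), (-1));
  ((1), (0), (0), (-1), (0), (0), (-1), (0));
  ((1), (0), (0), (-1), (0), (0), (1), (0));
  ((1), (0), (0), (-1), (1), (-1), (-1), (0));
  ((1), (0), (0), (-1), (1), (-1), (1), (0));
  ((1), (0), (0), (0), (-1), (0), (-1), (-1));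
  ((1), (0), (0), (0), (-1), (0), (0), (0));
  ((1), (0), (0), (0), (1), (-1), (-1), (-1));
  ((1), (0), (0), (0), (1), (-1), (0), (0));
  ((1), (0), (0), (1), (-1), (0), (-2), (-1));
  ((1), (0), (0), (1), (-1), (0), (0), (-1));
  ((1), (0), (0), (1), (0), (-1), (-2), (-1));
  ((1), (0), (0), (1), (0), (-1), (0), (-1));
  ((1), (0), (1), (-2), (0), (-1), (0), (0));
  ((1), (0), (1), (-2), (0), (-1), (1), (0));
  ((1), (0), (1), (-2), (1), (-1), (0), (0));
  ((1), (0), (1), (-2), (1), (-1), (1), (0));
  ((1), (0), (1), (-1), (-1), (-1), (0), (-1));
  ((1), (0), (1), (-1), (-1), (-1), (0), (0));
  ((1), (0), (1), (-1), (1), (-1), (0), (-1));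
  ((1), (0), (1), (-1), (1), (-1), (0), (0));
  ((1), (0), (1), (0), (-1), (-1), (-1), (0));
  ((1), (0), (1), (0), (-1), (-1), (0), (-2));
  ((1), (0), (1), (0), (-1), (0), (-1), (-1));
  ((1), (0), (1), (0), (-1), (0), (0), (-1));
  ((1), (0), (1), (0), (0), (-2), (-1), (-1));
  ((1), (0), (1), (0), (0), (-2), (0), (-1));
  ((1), (0), (1), (0), (0), (-1), (-1), (0));
  ((1), (0), (1), (0), (0), (-1), (0), (-2));
  ((1), (0), (1), (1), (-1), (-1), (-2), (-1));
  ((1), (0), (1), (1), (-1), (-1), (0), (-2));
  ((1), (0), (2), (-1), (-1), (-2), (0), (-1));
  ((1), (0), (2), (-1), (0), (-1), (0), (-1));
  ((1), (0), (2), (0), (-1), (-2), (-1), (-1));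
  ((1), (0), (2), (0), (-1), (-2), (0), (-2));
  ((1), (0), (2), (0), (-1), (-1), (-1), (-1));
  ((1), (0), (2), (0), (-1), (-1), (0), (-2));
  ((1), (1), (-2), (1), (0), (0), (-2), (0));
  ((1), (1), (-2), (1), (0), (0), (-1), (0));
  ((1), (1), (-1), (0), (-1), (0), (-1), (0));
  ((1), (1), (-1), (0), (1), (-1), (-1), (0));
  ((1), (1), (-1), (1), (-1), (0), (-2), (0));
  ((1), (1), (-1), (1), (-1), (0), (-1), (-1));
  ((1), (1), (-1), (1), (0), (-1), (-2), (0));
  ((1), (1), (-1), (1), (0), (-1), (-1), (-1));
  ((1), (1), (0), (0), (-1), (-1), (-2), (0));
  ((1), (1), (0), (0), (-1), (-1), (0), (-1));
  ((1), (1), (0), (0), (0), (-1), (-2), (0));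
  ((1), (1), (0), (0), (0), (-1), (0), (-1));
  ((1), (1), (1), (-1), (-1), (-1), (-1), (0));
  ((1), (1), (1), (-1), (-1), (-1), (0), (-1));
  ((1), (1), (1), (-1), (0), (-2), (-1), (0));
  ((1), (1), (1), (-1), (0), (-2), (0), (-1));
  ((1), (1), (1), (0), (-2), (-1), (-1), (-1));
  ((1), (1), (1), (0), (0), (-2), (-1), (-1));
  ((1), (1), (2), (-1), (-1), (-2), (-1), (-1));
  ((1), (1), (2), (-1), (-1), (-2), (0), (-1));
  ((2), (-1), (-1), (-1), (1), (0), (0), (0));
  ((2), (-1), (-1), (-1), (2), (0), (0), (0));
  ((2), (-1), (-1), (0), (1), (0), (-1), (-1));
  ((2), (-1), (-1), (0), (1), (0), (0), (0));
  ((2), (-1), (0), (-1), (1), (-1), (0), (-1));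
  ((2), (-1), (0), (-1), (1), (-1), (0), (0));
  ((2), (-1), (0), (-1), (1), (0), (0), (-1));
  ((2), (-1), (0), (-1), (1), (0), (0), (0));
  ((2), (-1), (0), (0), (0), (-1), (-1), (-1));
  ((2), (-1), (0), (0), (0), (-1), (0), (-1));
  ((2), (-1), (0), (0), (1), (0), (-1), (-1));
  ((2), (-1), (0), (0), (1), (0), (0), (-1));
  ((2), (-1), (0), (1), (0), (-1), (-1), (-2));
  ((2), (-1), (0), (1), (0), (-1), (-1), (-1));
  ((2), (-1), (0), (1), (0), (0), (-1), (-2));
  ((2), (-1), (0), (1), (0), (0), (-1), (-1));
  ((2), (-1), (1), (0), (0), (-1), (-1), (-2));
  ((2), (-1), (1), (0), (0), (-1), (0), (-1));
  ((2), (-1), (1), (1), (-1), (-1), (-1), (-2));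
  ((2), (-1), (1), (1), (0), (-1), (-1), (-2));
  ((2), (0), (-2), (0), (1), (0), (-1), (0));
  ((2), (0), (-1), (0), (0), (0), (-1), (-1));
  ((2), (0), (-1), (0), (0), (0), (-1), (0));
  ((2), (0), (-1), (0), (1), (-1), (-1), (-1));
  ((2), (0), (-1), (0), (1), (-1), (-1), (0));
  ((2), (0), (-1), (1), (0), (-1), (-2), (-1));
  ((2), (0), (-1), (1), (0), (-1), (-1), (-1));
  ((2), (0), (-1), (1), (0), (0), (-2), (-1));
  ((2), (0), (-1), (1), (0), (0), (-1), (-1));
  ((2), (0), (0), (-1), (0), (-1), (-1), (0));
  ((2), (0), (0), (-1), (0), (-1), (0), (-1));
  ((2), (0), (0), (-1), (1), (-1), (-1), (0));
  ((2), (0), (0), (-1), (1), (-1), (0), (-1));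
  ((2), (0), (0), (0), (-1), (-1), (-1), (-1));
  ((2), (0), (0), (0), (0), (-1), (-2), (-1));
  ((2), (0), (0), (0), (0), (-1), (0), (-1));
  ((2), (0), (0), (0), (1), (-1), (-1), (-1));
  ((2), (0), (0), (1), (-1), (-1), (-2), (-1));
  ((2), (0), (0), (1), (-1), (-1), (-1), (-2));
  ((2), (0), (0), (1), (0), (-1), (-2), (-1));
  ((2), (0), (0), (1), (0), (-1), (-1), (-2));
  ((2), (0), (1), (-1), (0), (-2), (-1), (-1));
  ((2), (0), (1), (-1), (0), (-2), (0), (-1));
  ((2), (0), (1), (-1), (0), (-1), (-1), (-1));
  ((2), (0), (1), (-1), (0), (-1), (0), (-1));
  ((2), (0), (1), (0), (-1), (-1), (-1), (-2));
  ((2), (0), (1), (0), (-1), (-1), (-1), (-1));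
  ((2), (0), (1), (0), (0), (-2), (-1), (-2));
  ((2), (0), (1), (0), (0), (-2), (-1), (-1));
  ((2), (0), (2), (0), (-1), (-2), (-1), (-2))].
Definition Ulit : seq ic := [::
  ((-2), (0), (0), (0), (0), (1), (1), (1));
  ((-1), (0), (-1), (0), (0), (1), (0), (1));
  ((-1), (0), (-1), (0), (0), (1), (1), (1));
  ((-1), (0), (-1), (0), (1), (1), (0), (1));
  ((-1), (0), (-1), (0), (1), (1), (1), (1));
  ((-1), (0), (-1), (1), (0), (1), (0), (0));
  ((-1), (0), (-1), (1), (0), (1), (0), (1));
  ((-1), (0), (0), (-1), (0), (1), (1), (1));
  ((-1), (0), (0), (-1), (1), (0), (1), (1));
  ((-1), (0), (0), (0), (0), (0), (0), (1));
  ((-1), (0), (0), (0), (0), (0), (1), (0));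
  ((-1), (0), (0), (0), (0), (1), (0), (1));
  ((-1), (0), (0), (0), (0), (1), (1), (0));
  ((-1), (0), (0), (1), (-1), (1), (0), (0));
  ((-1), (0), (0), (1), (0), (0), (0), (0));
  ((-1), (0), (1), (-1), (0), (0), (1), (0));
  ((-1), (0), (1), (-1), (0), (0), (1), (1));
  ((-1), (0), (1), (0), (-1), (0), (0), (0));
  ((-1), (0), (1), (0), (-1), (0), (1), (0));
  ((-1), (0), (1), (0), (0), (0), (0), (0));
  ((-1), (0), (1), (0), (0), (0), (1), (0));
  ((-1), (1), (-1), (0), (0), (0), (0), (1));
  ((-1), (1), (-1), (0), (0), (1), (0), (1));
  ((-1), (1), (0), (-1), (0), (0), (0), (1));
  ((-1), (1), (0), (-1), (0), (0), (1), (1));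
  ((-1), (1), (0), (0), (-1), (0), (0), (0));
  ((-1), (1), (0), (0), (-1), (0), (0), (1));
  ((-1), (1), (0), (0), (0), (0), (0), (0));
  ((-1), (1), (0), (0), (0), (0), (0), (1));
  ((-1), (1), (0), (1), (-1), (0), (-1), (0));
  ((-1), (1), (0), (1), (-1), (0), (0), (0));
  ((-1), (1), (1), (0), (-1), (-1), (0), (0));
  ((-1), (1), (1), (0), (-1), (0), (0), (0));
  ((0), (-1), (-1), (0), (1), (1), (0), (1));
  ((0), (-1), (-1), (0), (1), (1), (1), (0));
  ((0), (-1), (-1), (1), (0), (1), (0), (0));
  ((0), (-1), (-1), (1), (1), (1), (0), (0));
  ((0), (-1), (0), (0), (0), (1), (0), (0));
  ((0), (-1), (0), (0), (0), (1), (1), (0));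
  ((0), (-1), (0), (0), (1), (0), (0), (0));
  ((0), (-1), (0), (0), (1), (0), (1), (0));
  ((0), (-1), (1), (-1), (0), (0), (1), (0));
  ((0), (-1), (1), (-1), (1), (0), (1), (0));
  ((0), (-1), (1), (0), (0), (0), (0), (0));
  ((0), (-1), (1), (0), (0), (0), (1), (-1));
  ((0), (0), (-2), (0), (1), (1), (0), (1));
  ((0), (0), (-1), (0), (0), (1), (0), (0));
  ((0), (0), (-1), (0), (0), (1), (0), (1));
  ((0), (0), (-1), (0), (1), (0), (0), (0));
  ((0), (0), (-1), (0), (1), (0), (0), (1));
  ((0), (0), (-1), (1), (0), (0), (-1), (0));
  ((0), (0), (-1), (1), (0), (0), (0), (0));
  ((0), (0), (-1), (1), (0), (1), (-1), (0));
  ((0), (0), (-1), (1), (0), (1), (0), (0));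
  ((0), (0), (0), (-1), (0), (0), (0), (1));
  ((0), (0), (0), (-1), (0), (0), (1), (0));
  ((0), (0), (0), (-1), (1), (0), (0), (1));
  ((0), (0), (0), (-1), (1), (0), (1), (0));
  ((0), (0), (0), (0), (-1), (0), (0), (0));
  ((0), (0), (0), (0), (0), (0), (-1), (0));
  ((0), (0), (0), (0), (0), (0), (1), (0));
  ((0), (0), (0), (0), (1), (0), (0), (0));
  ((0), (0), (0), (1), (-1), (0), (-1), (0));
  ((0), (0), (0), (1), (-1), (0), (0), (-1));
  ((0), (0), (0), (1), (0), (0), (-1), (0));
  ((0), (0), (0), (1), (0), (0), (0), (-1));
  ((0), (0), (1), (-1), (0), (-1), (0), (0));
  ((0), (0), (1), (-1), (0), (-1), (1), (0));
  ((0), (0), (1), (-1), (0), (0), (0), (0));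
  ((0), (0), (1), (-1), (0), (0), (1), (0));
  ((0), (0), (1), (0), (-1), (0), (0), (-1));
  ((0), (0), (1), (0), (-1), (0), (0), (0));
  ((0), (0), (1), (0), (0), (-1), (0), (-1));
  ((0), (0), (1), (0), (0), (-1), (0), (0));
  ((0), (0), (2), (0), (-1), (-1), (0), (-1));
  ((0), (1), (-1), (0), (0), (0), (-1), (1));
  ((0), (1), (-1), (0), (0), (0), (0), (0));
  ((0), (1), (-1), (1), (-1), (0), (-1), (0));
  ((0), (1), (-1), (1), (0), (0), (-1), (0));
  ((0), (1), (0), (0), (-1), (0), (-1), (0));
  ((0), (1), (0), (0), (-1), (0), (0), (0));
  ((0), (1), (0), (0), (0), (-1), (-1), (0));
  ((0), (1), (0), (0), (0), (-1), (0), (0));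
  ((0), (1), (1), (-1), (-1), (-1), (0), (0));
  ((0), (1), (1), (-1), (0), (-1), (0), (0));
  ((0), (1), (1), (0), (-1), (-1), (-1), (0));
  ((0), (1), (1), (0), (-1), (-1), (0), (-1));
  ((1), (-1), (-1), (0), (1), (0), (0), (0));
  ((1), (-1), (-1), (0), (1), (1), (0), (0));
  ((1), (-1), (0), (-1), (1), (0), (0), (0));
  ((1), (-1), (0), (-1), (1), (0), (1), (0));
  ((1), (-1), (0), (0), (0), (0), (0), (-1));
  ((1), (-1), (0), (0), (0), (0), (0), (0));
  ((1), (-1), (0), (0), (1), (0), (0), (-1));
  ((1), (-1), (0), (0), (1), (0), (0), (0));
  ((1), (-1), (0), (1), (0), (0), (-1), (-1));
  ((1), (-1), (0), (1), (0), (0), (0), (-1));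
  ((1), (-1), (1), (0), (0), (-1), (0), (-1));
  ((1), (-1), (1), (0), (0), (0), (0), (-1));
  ((1), (0), (-1), (0), (0), (0), (-1), (0));
  ((1), (0), (-1), (0), (0), (0), (0), (0));
  ((1), (0), (-1), (0), (1), (0), (-1), (0));
  ((1), (0), (-1), (0), (1), (0), (0), (0));
  ((1), (0), (-1), (1), (0), (0), (-1), (-1));
  ((1), (0), (-1), (1), (0), (0), (-1), (0));
  ((1), (0), (0), (-1), (0), (0), (0), (0));
  ((1), (0), (0), (-1), (1), (-1), (0), (0));
  ((1), (0), (0), (0), (0), (-1), (-1), (0));
  ((1), (0), (0), (0), (0), (-1), (0), (-1));
  ((1), (0), (0), (0), (0), (0), (-1), (0));
  ((1), (0), (0), (0), (0), (0), (0), (-1));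
  ((1), (0), (0), (1), (-1), (0), (-1), (-1));
  ((1), (0), (0), (1), (0), (-1), (-1), (-1));
  ((1), (0), (1), (-1), (0), (-1), (0), (-1));
  ((1), (0), (1), (-1), (0), (-1), (0), (0));
  ((1), (0), (1), (0), (-1), (-1), (-1), (-1));
  ((1), (0), (1), (0), (-1), (-1), (0), (-1));
  ((1), (0), (1), (0), (0), (-1), (-1), (-1));
  ((1), (0), (1), (0), (0), (-1), (0), (-1));
  ((2), (0), (0), (0), (0), (-1), (-1), (-1))].
Definition Alist4 : seq (F4 * F4 * F4 * F4) := [::
  (F4_0, F4_1, F4_tau', F4_tau);
  (F4_0, F4_tau', F4_tau, F4_1);
  (F4_0, F4_tau, F4_1, F4_tau');
  (F4_1, F4_0, F4_tau, F4_tau');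
  (F4_1, F4_tau', F4_0, F4_tau);
  (F4_1, F4_tau, F4_tau', F4_0);
  (F4_tau', F4_0, F4_1, F4_tau);
  (F4_tau', F4_1, F4_tau, F4_0);
  (F4_tau', F4_tau, F4_0, F4_1);
  (F4_tau, F4_0, F4_tau', F4_1);
  (F4_tau, F4_1, F4_0, F4_tau');
  (F4_tau, F4_tau', F4_1, F4_0)].
Definition Alist4' : seq (F4 * F4 * F4 * F4) := [::
  (F4_0, F4_1, F4_tau, F4_tau');
  (F4_0, F4_tau', F4_1, F4_tau);
  (F4_0, F4_tau, F4_tau', F4_1);
  (F4_1, F4_0, F4_tau', F4_tau);
  (F4_1, F4_tau', F4_tau, F4_0);
  (F4_1, F4_tau, F4_0, F4_tau');
  (F4_tau', F4_0, F4_tau, F4_1);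
  (F4_tau', F4_1, F4_0, F4_tau);
  (F4_tau', F4_tau, F4_1, F4_0);
  (F4_tau, F4_0, F4_1, F4_tau');
  (F4_tau, F4_1, F4_tau', F4_0);
  (F4_tau, F4_tau', F4_0, F4_1)].

Lemma sq8b (x : int) : x * x <= 8 -> -2 <= x <= 2.
Proof. move=> h; apply/andP; split; nia. Qed.
Lemma sqge0 (x : int) : 0 <= x * x.
Proof. by rewrite -expr2 sqr_ge0. Qed.
Lemma cs4 (a b c d : int) : (a - b - c - d) * (a - b - c - d) <= 4 * (a*a + b*b + c*c + d*d).
Proof.
have e : 4 * (a*a + b*b + c*c + d*d) - (a - b - c - d) * (a - b - c - d) =
  (a+b)*(a+b) + (a+c)*(a+c) + (a+d)*(a+d) + (c-b)*(c-b) + (d-b)*(d-b) + (d-c)*(d-c) by ring.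
by rewrite -subr_ge0 e !addr_ge0 ?sqge0.
Qed.

Lemma rng_in (x : int) : -2 <= x <= 2 -> x \in rng.
Proof. move=> /andP[h1 h2]; rewrite !inE; lia. Qed.

Lemma mem_lists n (l : seq int) : size l = n -> all (fun x => x \in rng) l -> l \in lists n.
Proof.
elim: n l => [|n IH] [|a l] // [] hs /andP[ha hl].
apply/flattenP; exists [seq a :: l | l <- lists n].
  exact: (map_f (fun a0 => [seq a0 :: l0 | l0 <- lists n])).
by apply: (map_f (cons a)); apply: IH.
Qed.

Lemma box_in (c : ic) : N1R c <= 2 -> c \in box.
Proof.
case: c => [[[[[[[a0 a1] a2] a3] a4] a5] a6] a7] hN.
set y4 := a1 + a2 + a3 + 2 * a4.
set y5 := a0 + a1 + a2 + 2 * a5.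
set y6 := a0 + a1 + a3 + 2 * a6.
set y7 := a0 + a2 + a3 + 2 * a7.
have E : a0*a0 + a1*a1 + a2*a2 + a3*a3 + y4*y4 + y5*y5 + y6*y6 + y7*y7 <= 8.
  have -> : a0*a0 + a1*a1 + a2*a2 + a3*a3 + y4*y4 + y5*y5 + y6*y6 + y7*y7 =
       4 * N1R (a0, a1, a2, a3, a4, a5, a6, a7) by rewrite /y4 /y5 /y6 /y7 /=; ring.
  lia.
have s0 := sqge0 a0; have s1 := sqge0 a1; have s2 := sqge0 a2; have s3 := sqge0 a3.
have s4 := sqge0 y4; have s5 := sqge0 y5; have s6 := sqge0 y6; have s7 := sqge0 y7.
have b4 : a4 * a4 <= 8.
  have := cs4 y4 a1 a2 a3; have -> : y4 - a1 - a2 - a3 = 2 * a4 by rewrite /y4; ring.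
  lia.
have b5 : a5 * a5 <= 8.
  have := cs4 y5 a0 a1 a2; have -> : y5 - a0 - a1 - a2 = 2 * a5 by rewrite /y5; ring.
  lia.
have b6 : a6 * a6 <= 8.
  have := cs4 y6 a0 a1 a3; have -> : y6 - a0 - a1 - a3 = 2 * a6 by rewrite /y6; ring.
  lia.
have b7 : a7 * a7 <= 8.
  have := cs4 y7 a0 a2 a3; have -> : y7 - a0 - a2 - a3 = 2 * a7 by rewrite /y7; ring.
  lia.
apply/mapP; exists [:: a0; a1; a2; a3; a4; a5; a6; a7] => //.
apply: mem_lists => //=.
rewrite !rng_in ?sq8b //; lia.
Qed.

Definition F2l : seq 'F_2 := [:: 0; 1].
Definition allcls : seq cls :=
  allpairs pair (allpairs pair (allpairs pair (allpairs pair (allpairs pair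
   (allpairs pair (allpairs pair F2l F2l) F2l) F2l) F2l) F2l) F2l) F2l.
Definition inM (r : cls) := (r != zc) && (N1R r == 0) && (N2R r == 0).
Definition Ml : seq cls := filter inM allcls.
Definition fb (x : 'F_2) : bool := x == 1.
Definition bitsF (y : cls) : F4 * F4 * F4 * F4 :=
  let '(y0, y1, y2, y3, y4, y5, y6, y7) := y in
  ((fb y0, fb y1), (fb y2, fb y3), (fb y4, fb y5), (fb y6, fb y7)).
Definition Acl (r : cls) : bool := bitsF (YofR r) \in Alist4.

Lemma allcls_uniq : uniq allcls.
Proof. by vm_compute. Qed.
Lemma F2_in (x : 'F_2) : x \in F2l.
Proof.
case: x => [[|[|//]]] H; rewrite !inE; apply/orP; [left|right]; apply/eqP; exact: val_inj.
Qed.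
Lemma allcls_all (r : cls) : r \in allcls.
Proof.
case: r => [[[[[[[a0 a1] a2] a3] a4] a5] a6] a7].
by rewrite !allpairs_f ?F2_in.
Qed.

Lemma G1_uniq : uniq G1lit.
Proof. by vm_compute. Qed.
Lemma U_uniq : uniq Ulit.
Proof. by vm_compute. Qed.

Lemma D3 : let C := map cl G1lit in
  all (fun r => count (pred1 r) C == (if inM r then 8 else 0)%N) allcls.
Proof. by vm_compute. Qed.
Lemma D4 : let C := map (fun p => cl (conjR p)) G1lit in
  all (fun r => count (fun t => mulR r t == zc) C == 120)%N Ml.
Proof. by vm_compute. Qed.
Lemma D5 : let P := [seq mulR s t | s <- Ml, t <- Ml] in
  all (fun r => count (pred1 r) P == 60)%N Ml.
Proof. by vm_compute. Qed.
Lemma D6 : count (fun r => inM r && Acl r) allcls = 48%N.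
Proof. by vm_compute. Qed.
Lemma D7 : count (fun c => Acl (cl c)) Ulit = 96%N.
Proof. by vm_compute. Qed.
Lemma Acl_zc : Acl zc = false.
Proof. by vm_compute. Qed.

Lemma G1E : filter (fun c => NN c == (2, 0)) box = G1lit.
Proof. by apply/eqP; vm_compute. Qed.
Lemma UE : filter (fun c => NN c == (1, 0)) box = Ulit.
Proof. by apply/eqP; vm_compute. Qed.

Lemma G1_char c : (c \in G1lit) = (NN c == (2, 0)).
Proof.
rewrite -G1E mem_filter; case h: (NN c == (2, 0)) => //=.
by apply: box_in; move/eqP: h => [-> _].
Qed.
Lemma U_char c : (c \in Ulit) = (NN c == (1, 0)).
Proof.
rewrite -UE mem_filter; case h: (NN c == (1, 0)) => //=.
by apply: box_in; move/eqP: h => [-> _].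
Qed.

Lemma cnt_G1 r : count (fun p => cl p == r) G1lit = if inM r then 8%N else 0%N.
Proof. by have /eqP := allP D3 r (allcls_all r); rewrite count_map. Qed.
Lemma cnt_D4 r : inM r -> count (fun p => mulR r (cl (conjR p)) == zc) G1lit = 120%N.
Proof.
move=> h; have Hr : r \in Ml by rewrite mem_filter h allcls_all.
by have /eqP := allP D4 r Hr; rewrite count_map.
Qed.
Lemma cnt_D5 r : inM r -> count (pred1 r) [seq mulR s t | s <- Ml, t <- Ml] = 60%N.
Proof.
move=> h; have Hr : r \in Ml by rewrite mem_filter h allcls_all.
by have /eqP := allP D5 r Hr.
Qed.

Arguments G1lit : simpl never.
Arguments Ulit : simpl never.
Arguments Ml : simpl never.
Arguments allcls : simpl never.

Lemma count_sum (T : Type) (P : pred T) (s : seq T) :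
  count P s = (\sum_(x <- s) (P x : nat))%N.
Proof. by elim: s => [|x s IH]; rewrite ?big_nil ?big_cons //= IH. Qed.

Lemma sum_part (T : Type) (s : seq T) (key : T -> cls) (F : cls -> nat) :
  (\sum_(x <- s) F (key x) = \sum_(r <- allcls) count (fun x => key x == r) s * F r)%N.
Proof.
elim: s => [|x s IH].
  by rewrite big_nil big1_seq // => r _; rewrite mul0n.
rewrite big_cons IH /=.
under [X in _ = X]eq_bigr => r _ do rewrite mulnDl.
rewrite big_split /=; congr (_ + _)%N.
rewrite (bigD1_seq (key x)) ?allcls_all ?allcls_uniq //= eqxx mul1n big1 ?addn0 //.
by move=> r /negbTE; rewrite eq_sym => ->.
Qed.

Lemma count_allpairs (S T U : Type) (f : S -> T -> U) (P : pred U) s t :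
  count P [seq f q p | q <- s, p <- t] = (\sum_(q <- s) count (fun p => P (f q p)) t)%N.
Proof.
elim: s => [|q s IH]; first by rewrite big_nil.
by rewrite big_cons /= count_cat count_map IH.
Qed.

Lemma count_undup_mult (T : eqType) (s : seq T) (m : nat) (P : pred T) :
  (forall z, z \in s -> count_mem z s = m) -> count P s = (m * count P (undup s))%N.
Proof.
move=> hm.
rewrite -((seq.permP (perm_count_undup s)) P) count_flatten -map_comp.
rewrite (_ : map _ (undup s) = [seq ((P x : nat) * m)%N | x <- undup s]); last first.
  by apply/eq_in_map => x; rewrite mem_undup => hx /=; rewrite count_nseq hm.
rewrite sumnE big_map count_sum -big_distrl /= mulnC.
by [].
Qed.

Lemma mulq_conj2 (q p : ic) : NN p = (2, 0) -> mulR (mulR q p) (conjR p) = dbl q.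
Proof.
rewrite /NN => -[h1 h2]; rewrite mul_conj h1 h2.
by d8 q; rewrite /=; apply: pair8_eq; ring.
Qed.

Lemma mulq_conj2' (z p : ic) : NN p = (2, 0) -> mulR (mulR z (conjR p)) p = dbl z.
Proof.
move=> h; rewrite -{2}(conjK p); apply: mulq_conj2.
by rewrite /NN N1_conj N2_conj.
Qed.

Lemma dbl_inj : injective dbl.
Proof.
move=> a b; d8 a; d8 b; rewrite /dbl /sc /= => -[e0 e1 e2 e3 e4 e5 e6 e7].
apply: pair8_eq; lia.
Qed.

Lemma NN_mul (a b : ic) : NN (mulR a b) =
  (N1R a * N1R b + N2R a * N2R b, N1R a * N2R b + N2R a * N1R b + N2R a * N2R b).
Proof. by rewrite /NN N1_mul N2_mul. Qed.

Lemma cl_zc_N (z : ic) : cl z = zc -> NN z = (4 * N1R (hlf z), 4 * N2R (hlf z)).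
Proof. by move=> /cl0 {1}->; rewrite /NN N1_dbl N2_dbl. Qed.

Lemma F2_2 : (2%:R : 'F_2) = 0.
Proof. exact: (pchar_Fp_0 (isT : prime 2)). Qed.

Lemma inM_of (z : ic) k : NN z = (2 ^+ k.+1, 0) -> cl z != zc -> inM (cl z).
Proof.
rewrite /NN /inM => -[h1 h2] hz; rewrite hz -cl_N1 -cl_N2 h1 h2 rmorph0 rmorphXn rmorph_nat F2_2.
by rewrite expr0n /= eqxx.
Qed.

Lemma descend k (z p : ic) : NN z = (2 ^+ k.+2, 0) -> cl z != zc -> p \in G1lit ->
  cl (mulR z (conjR p)) = zc ->
  let q := hlf (mulR z (conjR p)) in
  [/\ NN q = (2 ^+ k.+1, 0), cl q != zc & mulR q p = z].
Proof.
move=> hz hcz hp hw q.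
have hp2 : NN p = (2, 0) by apply/eqP; rewrite -G1_char.
have ew : mulR z (conjR p) = dbl q := cl0 hw.
have ezq : mulR q p = z.
  by apply: dbl_inj; rewrite -mul_dbl -ew mulq_conj2'.
split => //.
- have : NN (dbl q) = NN (mulR z (conjR p)) by rewrite ew.
  move: hz hp2; rewrite /NN N1_dbl N2_dbl N1_mul N2_mul N1_conj N2_conj.
  move=> [-> ->] [-> ->] [e1 e2].
  have f : 4 * N1R q = 4 * 2 ^+ k.+1 by rewrite e1 !exprS; ring.
  congr pair; first by apply: (mulfI (_ : (4 : int) != 0)).
  apply: (mulfI (_ : (4 : int) != 0)); first done.
  by rewrite e2; ring.
- apply/negP => /eqP hq0; move/negP: hcz; apply.
  by rewrite -ezq (cl0 hq0) mul_dbl cl_dbl.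
Qed.

Fixpoint L (k : nat) : seq ic :=
  if k is k'.+1 then undup [seq z <- [seq mulR q p | q <- L k', p <- G1lit] | cl z != zc]
  else G1lit.

Lemma L0 : L 0 = G1lit.
Proof. by []. Qed.
Lemma LS k : L k.+1 = undup [seq z <- [seq mulR q p | q <- L k, p <- G1lit] | cl z != zc].
Proof. by []. Qed.

Lemma charL k z : (z \in L k) = (NN z == (2 ^+ k.+1, 0)) && (cl z != zc).
Proof.
elim: k z => [|k IH] z.
  rewrite L0 G1_char expr1.
  case h: (NN z == (2, 0)) => //=.
  symmetry; apply/negP => /eqP hz; move: (cl_zc_N hz); move/eqP: h => -> [ha _]; lia.
rewrite LS mem_undup mem_filter.
apply/andP/andP.
- move=> [hcz hin]; case: (allpairsP hin) => [[q p] /= [hq hp ez]]; subst z; split => //.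
  move: hq; rewrite IH => /andP[/eqP hq _]; move: hp; rewrite G1_char => /eqP hp.
  move: hq hp; rewrite NN_mul /NN => -[-> ->] [-> ->].
  by apply/eqP; rewrite [in RHS]exprS; congr pair; ring.
- move=> [/eqP hz hcz]; split => //.
  have hM := inM_of hz hcz.
  have [p hp hpz] : exists2 p, p \in G1lit & mulR (cl z) (cl (conjR p)) == zc.
    by apply/hasP; rewrite has_count cnt_D4.
  have hw : cl (mulR z (conjR p)) = zc by rewrite cl_mul; apply/eqP.
  have [hq1 hq2 hq3] := descend hz hcz hp hw.
  rewrite -{1}hq3; apply: allpairs_f => //.
  by rewrite IH hq1 eqxx hq2.
Qed.

Lemma uniqL k : uniq (L k).
Proof. case: k => [|k]; [rewrite L0; exact: G1_uniq | rewrite LS; exact: undup_uniq]. Qed.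

Lemma inM_L k z : z \in L k -> inM (cl z).
Proof. rewrite charL => /andP[/eqP h hz]; exact: inM_of h hz. Qed.

Lemma key k (z p : ic) : NN z = (2 ^+ k.+2, 0) -> cl z != zc -> p \in G1lit ->
  count (fun q => mulR q p == z) (L k) = (mulR (cl z) (cl (conjR p)) == zc).
Proof.
move=> hz hcz hp.
have hp2 : NN p = (2, 0) by apply/eqP; rewrite -G1_char.
case: eqP => h0.
- have hw : cl (mulR z (conjR p)) = zc by rewrite cl_mul.
  have [hq1 hq2 hq3] := descend hz hcz hp hw.
  set q := hlf (mulR z (conjR p)) in hq1 hq2 hq3 *.
  have hqL : q \in L k by rewrite charL hq1 eqxx hq2.
  rewrite (@eq_count _ _ (pred1 q)); first by rewrite count_uniq_mem ?uniqL ?hqL.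
  move=> q' /=; apply/eqP/eqP => [e|->//].
  by apply: dbl_inj; rewrite -(mulq_conj2 q' hp2) e (cl0 hw).
- apply/eqP; rewrite -leqn0 leqNgt -has_count; apply/negP => /hasP [q' _ /eqP e].
  by apply: h0; rewrite -cl_mul -e mulq_conj2 // cl_dbl.
Qed.

Lemma mult k z : z \in [seq z <- [seq mulR q p | q <- L k, p <- G1lit] | cl z != zc] ->
  count_mem z [seq z <- [seq mulR q p | q <- L k, p <- G1lit] | cl z != zc] = 120%N.
Proof.
move=> hz.
have hzL : z \in L k.+1 by rewrite LS mem_undup.
move: hzL; rewrite charL => /andP[/eqP hNz hcz].
rewrite count_filter (@eq_count _ _ (pred1 z)); last first.
  by move=> x /=; case: eqP => // ->; rewrite hcz.
rewrite count_allpairs.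
under eq_bigr => q _ do rewrite count_sum.
rewrite exchange_big /=.
under eq_big_seq => p hp do rewrite -count_sum (key hNz hcz hp).
by rewrite -count_sum cnt_D4 // (inM_of hNz hcz).
Qed.

Lemma sum_if (f : cls -> nat) (c : nat) :
  (\sum_(σ <- allcls) (if inM σ then c else 0) * f σ = c * \sum_(σ <- Ml) f σ)%N.
Proof.
rewrite /Ml big_filter big_distrr [RHS]big_mkcond /=; apply: eq_bigr => σ _.
by case: (inM σ); rewrite ?mul0n ?muln0.
Qed.

Lemma F_G1 (σ r : cls) :
  count (fun p => mulR σ (cl p) == r) G1lit = (8 * count (fun t => mulR σ t == r) Ml)%N.
Proof.
rewrite count_sum (sum_part G1lit cl (fun τ => (mulR σ τ == r : nat))).
under eq_bigr => τ _ do rewrite cnt_G1.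
by rewrite sum_if count_sum.
Qed.

Lemma countL k r : inM r -> count (fun z => cl z == r) (L k) = (8 * 4 ^ k)%N.
Proof.
elim: k r => [|k IH] r hr.
  by rewrite L0 cnt_G1 hr expn0 muln1.
set s := [seq mulR q p | q <- L k, p <- G1lit].
set s' := [seq z <- s | cl z != zc].
have E0 : L k.+1 = undup s' by rewrite LS.
have E1 := count_undup_mult (fun z => cl z == r) (@mult k).
have E2 : count (fun z => cl z == r) s' = count (fun z => cl z == r) s.
  rewrite count_filter; apply: eq_count => z /=.
  case: eqP => // ->; move: hr; rewrite /inM => /andP[/andP[-> _] _]; by [].
have hcnt : forall σ, count (fun z => cl z == σ) (L k) = if inM σ then (8 * 4 ^ k)%N else 0%N.
  move=> σ; case hσ: (inM σ); first exact: IH.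
  apply/eqP; rewrite -leqn0 leqNgt -has_count; apply/negP => /hasP [z hz /eqP e].
  by move: (inM_L hz); rewrite e hσ.
have E3 : count (fun z => cl z == r) s = (8 * 4 ^ k * (8 * 60))%N.
  rewrite count_allpairs.
  rewrite (eq_bigr (fun q => count (fun p => mulR (cl q) (cl p) == r) G1lit)); last first.
    by move=> q _; apply: eq_count => p /=; rewrite cl_mul.
  have SP : (\sum_(q <- L k) count (fun p => mulR (cl q) (cl p) == r) G1lit =
     \sum_(σ <- allcls) count (fun z => cl z == σ) (L k) *
      count (fun p => mulR σ (cl p) == r) G1lit)%N :=
    sum_part (L k) cl (fun σ => count (fun p => mulR σ (cl p) == r) G1lit).
  
  rewrite SP.
  
  under eq_bigr => σ _ do rewrite hcnt.
  
  rewrite sum_if.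
  
  under eq_bigr => σ _ do rewrite F_G1.
  
  rewrite -big_distrr.
  
  rewrite -(count_allpairs (fun a b : cls => mulR a b) (pred1 r) Ml Ml).
  
  by rewrite cnt_D5.
rewrite E0; move: E1; rewrite -/s -/s' E2 E3 expnS.
move=> h; apply/eqP; rewrite -(eqn_pmul2l (isT : (0 < 120)%N)) -h; apply/eqP.
set y := (4 ^ k)%N; lia.
Qed.

Definition o0 : 'I_4 := @Ordinal 4 0 isT.
Definition o1 : 'I_4 := @Ordinal 4 1 isT.
Definition o2 : 'I_4 := @Ordinal 4 2 isT.
Definition o3 : 'I_4 := @Ordinal 4 3 isT.
Definition O4 : seq 'I_4 := [:: o0; o1; o2; o3].
Definition tup4 (T : Type) (w : 'I_4 -> T) : T * T * T * T := (w o0, w o1, w o2, w o3).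

Lemma tpE (T : finType) (x y z : T) :
  tperm x y z = if z == x then y else if z == y then x else z.
Proof.
case: tpermP => [->|->|Hx Hy]; first by rewrite eqxx.
  by case: eqP => [->|]; rewrite ?eqxx.
have /negbTE -> : z != x by apply/eqP.
by have /negbTE -> : z != y by apply/eqP.
Qed.

Lemma w4 (T : Type) (w : 'I_4 -> T) i :
  w i = match val i with 0 => w o0 | 1 => w o1 | 2 => w o2 | _ => w o3 end.
Proof. by case: i => [[|[|[|[|//]]]] H] /=; congr w; apply: val_inj. Qed.

Lemma tup4_eq (T : Type) (w v : 'I_4 -> T) : tup4 w = tup4 v -> forall i, w i = v i.
Proof. by rewrite /tup4 => -[e0 e1 e2 e3] i; rewrite w4 [v i]w4; case: (val i) => [|[|[|]]]. Qed.

Definition unb (f : F4) : 'I_4 :=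
  match f with (false, false) => o0 | (true, false) => o1 | (true, true) => o2 | (false, true) => o3 end.
Lemma base4K : cancel base4 unb.
Proof. by case=> [[|[|[|[|//]]]] H]; apply: val_inj. Qed.
Lemma base4_inj : injective base4.
Proof. exact: can_inj base4K. Qed.

Lemma O4_all i : i \in O4.
Proof. by rewrite (w4 id i); case: (val i) => [|[|[|]]]. Qed.

Lemma distinct4 : all (fun a0 => all (fun a1 => all (fun a2 => all (fun a3 =>
  [&& a0 != a1, a0 != a2, a0 != a3, a1 != a2, a1 != a3 & a2 != a3] ==>
  ((base4 a0, base4 a1, base4 a2, base4 a3) \in Alist4 ++ Alist4')) O4) O4) O4) O4.
Proof. by vm_compute. Qed.

Lemma Aeven t : t \in Alist4 -> exists s : 'S_4, ~~ odd_perm s /\ tup4 (fun i => base4 (s i)) = t.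
Proof.
rewrite /Alist4 !inE.
case/orP => [/eqP -> | ]; first by exists (tperm o0 o0 * tperm o0 o0)%g; split; [by rewrite !odd_permM !odd_tperm | by rewrite /tup4 !permM !tpE].
case/orP => [/eqP -> | ]; first by exists (tperm o1 o2 * tperm o1 o3)%g; split; [by rewrite !odd_permM !odd_tperm | by rewrite /tup4 !permM !tpE].
case/orP => [/eqP -> | ]; first by exists (tperm o1 o2 * tperm o2 o3)%g; split; [by rewrite !odd_permM !odd_tperm | by rewrite /tup4 !permM !tpE].
case/orP => [/eqP -> | ]; first by exists (tperm o0 o1 * tperm o2 o3)%g; split; [by rewrite !odd_permM !odd_tperm | by rewrite /tup4 !permM !tpE].
case/orP => [/eqP -> | ]; first by exists (tperm o0 o1 * tperm o0 o2)%g; split; [by rewrite !odd_permM !odd_tperm | by rewrite /tup4 !permM !tpE].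
case/orP => [/eqP -> | ]; first by exists (tperm o0 o1 * tperm o0 o3)%g; split; [by rewrite !odd_permM !odd_tperm | by rewrite /tup4 !permM !tpE].
case/orP => [/eqP -> | ]; first by exists (tperm o0 o1 * tperm o1 o2)%g; split; [by rewrite !odd_permM !odd_tperm | by rewrite /tup4 !permM !tpE].
case/orP => [/eqP -> | ]; first by exists (tperm o0 o2 * tperm o0 o3)%g; split; [by rewrite !odd_permM !odd_tperm | by rewrite /tup4 !permM !tpE].
case/orP => [/eqP -> | ]; first by exists (tperm o0 o2 * tperm o1 o3)%g; split; [by rewrite !odd_permM !odd_tperm | by rewrite /tup4 !permM !tpE].
case/orP => [/eqP -> | ]; first by exists (tperm o0 o1 * tperm o1 o3)%g; split; [by rewrite !odd_permM !odd_tperm | by rewrite /tup4 !permM !tpE].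
case/orP => [/eqP -> | ]; first by exists (tperm o0 o2 * tperm o2 o3)%g; split; [by rewrite !odd_permM !odd_tperm | by rewrite /tup4 !permM !tpE].
move=> /eqP ->; exists (tperm o0 o3 * tperm o1 o2)%g; split; [by rewrite !odd_permM !odd_tperm | by rewrite /tup4 !permM !tpE].
Qed.

Lemma Aodd t : t \in Alist4' -> exists s : 'S_4, odd_perm s /\ tup4 (fun i => base4 (s i)) = t.
Proof.
rewrite /Alist4' !inE.
case/orP => [/eqP -> | ]; first by exists (tperm o0 o0 * tperm o0 o0 * tperm o2 o3)%g; split; [by rewrite !odd_permM !odd_tperm | by rewrite /tup4 !permM !tpE].
case/orP => [/eqP -> | ]; first by exists (tperm o0 o0 * tperm o0 o0 * tperm o1 o2)%g; split; [by rewrite !odd_permM !odd_tperm | by rewrite /tup4 !permM !tpE].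
case/orP => [/eqP -> | ]; first by exists (tperm o0 o0 * tperm o0 o0 * tperm o1 o3)%g; split; [by rewrite !odd_permM !odd_tperm | by rewrite /tup4 !permM !tpE].
case/orP => [/eqP -> | ]; first by exists (tperm o0 o0 * tperm o0 o0 * tperm o0 o1)%g; split; [by rewrite !odd_permM !odd_tperm | by rewrite /tup4 !permM !tpE].
case/orP => [/eqP -> | ]; first by exists (tperm o0 o1 * tperm o0 o2 * tperm o0 o3)%g; split; [by rewrite !odd_permM !odd_tperm | by rewrite /tup4 !permM !tpE].
case/orP => [/eqP -> | ]; first by exists (tperm o0 o1 * tperm o0 o2 * tperm o2 o3)%g; split; [by rewrite !odd_permM !odd_tperm | by rewrite /tup4 !permM !tpE].
case/orP => [/eqP -> | ]; first by exists (tperm o0 o1 * tperm o1 o2 * tperm o1 o3)%g; split; [by rewrite !odd_permM !odd_tperm | by rewrite /tup4 !permM !tpE].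
case/orP => [/eqP -> | ]; first by exists (tperm o0 o0 * tperm o0 o0 * tperm o0 o2)%g; split; [by rewrite !odd_permM !odd_tperm | by rewrite /tup4 !permM !tpE].
case/orP => [/eqP -> | ]; first by exists (tperm o0 o1 * tperm o0 o3 * tperm o1 o2)%g; split; [by rewrite !odd_permM !odd_tperm | by rewrite /tup4 !permM !tpE].
case/orP => [/eqP -> | ]; first by exists (tperm o0 o1 * tperm o1 o2 * tperm o2 o3)%g; split; [by rewrite !odd_permM !odd_tperm | by rewrite /tup4 !permM !tpE].
case/orP => [/eqP -> | ]; first by exists (tperm o0 o0 * tperm o0 o0 * tperm o0 o3)%g; split; [by rewrite !odd_permM !odd_tperm | by rewrite /tup4 !permM !tpE].
move=> /eqP ->; exists (tperm o0 o1 * tperm o0 o2 * tperm o1 o3)%g; split; [by rewrite !odd_permM !odd_tperm | by rewrite /tup4 !permM !tpE].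
Qed.

Lemma perm_tup (s : 'S_4) : tup4 (fun i => base4 (s i)) \in Alist4 ++ Alist4'.
Proof.
have := allP distinct4 (s o0) (O4_all _) => /allP /(_ (s o1) (O4_all _)) /allP /(_ (s o2) (O4_all _)).
move=> /allP /(_ (s o3) (O4_all _)) /implyP; apply.
by rewrite !(inj_eq perm_inj).
Qed.

Lemma dotA_iff w : dotA w <-> tup4 w \in Alist4.
Proof.
split.
- move=> [s [hs hw]].
  have e : tup4 w = tup4 (fun i => base4 (s i)) by rewrite /tup4 !hw.
  have := perm_tup s; rewrite mem_cat -e => /orP [//|/Aodd [s' [hs' e']]].
  have ss : s' = s.
    apply/permP => i; apply: base4_inj; apply: (tup4_eq (w := fun j => base4 (s' j)) (v := fun j => base4 (s j))).
    by rewrite e' e.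
  by move: hs; rewrite -ss hs'.
- move=> /Aeven [s [hs e]]; exists s; split => // i.
  by apply: (tup4_eq (w := w) (v := fun i => base4 (s i))); rewrite e.
Qed.

Lemma dotA'_iff w : dotA' w <-> tup4 w \in Alist4'.
Proof.
split.
- move=> [s [hs hw]].
  have e : tup4 w = tup4 (fun i => base4 (s i)) by rewrite /tup4 !hw.
  have := perm_tup s; rewrite mem_cat -e => /orP [/Aeven [s' [hs' e']]|//].
  have ss : s' = s.
    apply/permP => i; apply: base4_inj; apply: (tup4_eq (w := fun j => base4 (s' j)) (v := fun j => base4 (s j))).
    by rewrite e' e.
  by move: hs'; rewrite ss hs.
- move=> /Aodd [s [hs e]]; exists s; split => // i.
  by apply: (tup4_eq (w := w) (v := fun i => base4 (s i))); rewrite e.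
Qed.

Lemma cntL_all k σ : count (fun z => cl z == σ) (L k) = if inM σ then (8 * 4 ^ k)%N else 0%N.
Proof.
case hσ: (inM σ); first exact: countL.
apply/eqP; rewrite -leqn0 leqNgt -has_count; apply/negP => /hasP [z hz /eqP e].
by move: (inM_L hz); rewrite e hσ.
Qed.

Lemma countA k : count (fun c => Acl (cl c)) (L k) = (48 * (8 * 4 ^ k))%N.
Proof.
rewrite count_sum.
have SP : (\sum_(c <- L k) (Acl (cl c) : nat) =
   \sum_(σ <- allcls) count (fun z => cl z == σ) (L k) * (Acl σ : nat))%N :=
  sum_part (L k) cl (fun σ => (Acl σ : nat)).
rewrite SP.
under eq_bigr => σ _ do rewrite cntL_all.
rewrite sum_if -count_sum.
have hA : count Acl Ml = 48%N.
  by rewrite /Ml count_filter -D6; apply: eq_count => r /=; exact: andbC.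
by rewrite hA mulnC.
Qed.

Definition Sc (n : nat) : seq ic :=
  match n with
  | 0 => [::]
  | 1 => [seq c <- Ulit | Acl (cl c)]
  | m.+2 => [seq c <- L (2 * m).+1 | Acl (cl c)]
  end.

Lemma Sc1 : Sc 1 = [seq c <- Ulit | Acl (cl c)].
Proof. by []. Qed.
Lemma ScS m : Sc m.+2 = [seq c <- L (2 * m).+1 | Acl (cl c)].
Proof. by []. Qed.

Lemma size_Sc n : (1 <= n)%N -> size (Sc n) = (3 * 2 ^ (4 * n + 1))%N.
Proof.
case: n => [//|[|m]] _.
  by rewrite Sc1 size_filter D7.
rewrite ScS size_filter countA.
rewrite (_ : 4 = 2 ^ 2)%N // -expnM.
rewrite (_ : (4 * m.+2 + 1) = 2 * (2 * m).+1 + 7)%N; last by lia.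
rewrite expnD (_ : 2 ^ 7 = 128)%N //.
set y := (2 ^ _)%N; lia.
Qed.

Lemma uniq_Sc n : uniq (Sc n).
Proof.
case: n => [//|[|m]]; first by rewrite Sc1; exact: filter_uniq U_uniq.
rewrite ScS.
exact: filter_uniq (uniqL _).
Qed.

Lemma charSc n c : (1 <= n)%N ->
  (c \in Sc n) = (NN c == (2 ^+ (2 * n.-1), 0)) && Acl (cl c).
Proof.
case: n => [//|[|m]] _.
  by rewrite Sc1 mem_filter U_char muln0 expr0 andbC.
rewrite ScS mem_filter charL andbC /=.
rewrite (_ : (2 * m.+1)%N = (2 * m).+2); last by lia.
case hA: (Acl (cl c)); rewrite ?andbF ?andbT //.
case: eqP => // hz /=.
by apply/negP => /eqP e; move: hA; rewrite e Acl_zc.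
Qed.

Definition pick4 (i : 'I_4) (Y : ic) : int * int :=
  let '(y0, y1, y2, y3, y4, y5, y6, y7) := Y in
  match val i with 0 => (y0, y1) | 1 => (y2, y3) | 2 => (y4, y5) | _ => (y6, y7) end.
Definition yv (c : ic) : zvec4 := [ffun i => pick4 i (YofR c)].
Definition xofy (n : nat) (y : zvec4) : vec4 :=
  [ffun i => ((y i).1%:~R / 2 ^+ n, (y i).2%:~R / 2 ^+ n)].
Definition flat (y : zvec4) : ic :=
  ((y o0).1, (y o0).2, (y o1).1, (y o1).2, (y o2).1, (y o2).2, (y o3).1, (y o3).2).

Lemma flat_yv c : flat (yv c) = YofR c.
Proof. by d8 c; rewrite /flat !ffunE. Qed.

Lemma YofR_inj : injective (@YofR int).
Proof.
move=> a b; d8 a; d8 b; rewrite /= => -[e0 e1 e2 e3 e4 e5 e6 e7].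
apply: pair8_eq; lia.
Qed.

Lemma yv_inj : injective yv.
Proof. by move=> c d e; apply: YofR_inj; rewrite -!flat_yv e. Qed.

Lemma scaled_xofy n y : scaled n y (xofy n y).
Proof. by move=> i; rewrite ffunE. Qed.
Lemma scaled_eq n y x : scaled n y x -> x = xofy n y.
Proof. by move=> h; apply/ffunP => i; rewrite h ffunE. Qed.

Lemma pow2_neq0 n : (2 ^+ n : rat) != 0.
Proof. by rewrite expf_neq0. Qed.

Lemma xofy_inj n : injective (xofy n).
Proof.
move=> y y' e; apply/ffunP => i.
have := congr1 (fun x : vec4 => x i) e; rewrite !ffunE => -[e1 e2].
have f1 := congr1 (fun t => t * 2 ^+ n) e1; have f2 := congr1 (fun t => t * 2 ^+ n) e2.
move: f1 f2; rewrite /= !divfK ?pow2_neq0 // => /intr_inj f1 /intr_inj f2.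
by move: f1 f2; case: (y i) => a b; case: (y' i) => a' b' /= -> ->.
Qed.

Definition S1 (y : zvec4) : int :=
  (y o0).1 * (y o0).1 + (y o0).2 * (y o0).2 + ((y o1).1 * (y o1).1 + (y o1).2 * (y o1).2) +
  ((y o2).1 * (y o2).1 + (y o2).2 * (y o2).2) + ((y o3).1 * (y o3).1 + (y o3).2 * (y o3).2).
Definition S2 (y : zvec4) : int :=
  ((y o0).1 * (y o0).2 + (y o0).2 * (y o0).1 + (y o0).2 * (y o0).2) +
  ((y o1).1 * (y o1).2 + (y o1).2 * (y o1).1 + (y o1).2 * (y o1).2) +
  ((y o2).1 * (y o2).2 + (y o2).2 * (y o2).1 + (y o2).2 * (y o2).2) +
  ((y o3).1 * (y o3).2 + (y o3).2 * (y o3).1 + (y o3).2 * (y o3).2).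

Lemma enum4 : enum 'I_4 = O4.
Proof. by apply: (inj_map val_inj); rewrite val_enum_ord. Qed.

Lemma dotE n y : dot (xofy n y) (xofy n y) =
  ((S1 y)%:~R / (2 ^+ n) ^+ 2, (S2 y)%:~R / (2 ^+ n) ^+ 2).
Proof.
have d0 := pow2_neq0 n.
rewrite /dot enum4 /= !ffunE /qt_mul /qt_add /= /S1 /S2.
congr pair; rewrite !(rmorphD, rmorphM) /=; field; exact: d0.
Qed.

Lemma dot_one n y : (dot (xofy n y) (xofy n y) = qt_one) <->
  (S1 y = 2 ^+ (2 * n) /\ S2 y = 0).
Proof.
have D0 : ((2 ^+ n) ^+ 2 : rat) != 0 by rewrite expf_neq0 ?pow2_neq0.
have DE : ((2 ^+ n) ^+ 2 : rat) = (2 ^+ (2 * n) : int)%:~R.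
  by rewrite rmorphXn rmorph_nat -exprM mulnC.
rewrite dotE /qt_one; split.
- move=> [e1 e2]; split.
  + apply: (@intr_inj rat); rewrite -DE.
    by have := congr1 (fun t => t * (2 ^+ n) ^+ 2) e1; rewrite /= divfK // mul1r.
  + have := congr1 (fun t => t * (2 ^+ n) ^+ 2) e2; rewrite /= divfK // mul0r.
    by move/eqP; rewrite intr_eq0 => /eqP.
- by move=> [-> ->]; rewrite rmorph0 mul0r -DE divff.
Qed.

Lemma S1_yv c : S1 (yv c) = 4 * N1R c.
Proof. by d8 c; rewrite /S1 !ffunE /=; ring. Qed.
Lemma S2_yv c : S2 (yv c) = 4 * N2R c.
Proof. by d8 c; rewrite /S2 !ffunE /=; ring. Qed.

Lemma fb_intr (x : int) : fb (x%:~R) = odd `|x|%N.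
Proof. by rewrite /fb F2_intr; case: (odd _). Qed.

Lemma bits_flat y : bitsF (cl (flat y)) = tup4 (redv y).
Proof. by rewrite /flat /tup4 /redv /red /= !fb_intr. Qed.

Lemma yv_flat (y : zvec4) (c : ic) : YofR c = flat y -> yv c = y.
Proof.
move=> h; apply/ffunP => i; rewrite ffunE h [RHS]w4.
by case: i => [[|[|[|[|//]]]] H] /=; rewrite [RHS]surjective_pairing.
Qed.

Definition cofY (Y : ic) : ic :=
  let '(y0, y1, y2, y3, y4, y5, y6, y7) := Y in
  (y0, y1, y2, y3, ((y4 - y1 - y2 - y3) %/ 2)%Z, ((y5 - y0 - y1 - y2) %/ 2)%Z,
   ((y6 - y0 - y1 - y3) %/ 2)%Z, ((y7 - y0 - y2 - y3) %/ 2)%Z).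

Definition chk (r : cls) : bool :=
  let '(r0, r1, r2, r3, r4, r5, r6, r7) := r in
  [&& r4 - r1 - r2 - r3 == 0, r5 - r0 - r1 - r2 == 0, r6 - r0 - r1 - r3 == 0 &
      r7 - r0 - r2 - r3 == 0].

Lemma chkA : all (fun r => (bitsF r \in Alist4) ==> chk r) allcls.
Proof. by vm_compute. Qed.

Lemma YofR_cofY Y : bitsF (cl Y) \in Alist4 -> YofR (cofY Y) = Y.
Proof.
move=> h; have := allP chkA (cl Y) (allcls_all _); rewrite h /=; clear h.
d8 Y; rewrite /chk /cl /= -!rmorphB !F2_eq0 => /and4P [h4 h5 h6 h7].
apply: pair8_eq => //.
- by rewrite -(even_half h4); ring.
- by rewrite -(even_half h5); ring.
- by rewrite -(even_half h6); ring.
- by rewrite -(even_half h7); ring.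
Qed.

Lemma bits_yv c : tup4 (redv (yv c)) = bitsF (YofR (cl c)).
Proof. by rewrite -cl_Y -flat_yv bits_flat. Qed.

Lemma NN_of_S n c : (1 <= n)%N -> S1 (yv c) = 2 ^+ (2 * n) -> S2 (yv c) = 0 ->
  NN c = (2 ^+ (2 * n.-1), 0).
Proof.
case: n => [//|n] _; rewrite S1_yv S2_yv /NN => e1 e2.
congr pair.
  apply: (mulfI (_ : (4 : int) != 0)); first done.
  by rewrite e1 /= mulnS exprD (_ : (2 ^+ 2 : int) = 4) //; ring.
apply: (mulfI (_ : (4 : int) != 0)); first done.
by rewrite e2 mulr0.
Qed.

Lemma dotS_iff n x : (1 <= n)%N ->
  dotS n x <-> x \in map (fun c => xofy n (yv c)) (Sc n).
Proof.
move=> hn; split.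
- move=> [y [hs [hd hA]]].
  have ex := scaled_eq hs; subst x.
  move/dot_one: hd => [h1 h2].
  move/dotA_iff: hA => hA.
  have hb : bitsF (cl (flat y)) \in Alist4 by rewrite bits_flat.
  have hY := YofR_cofY hb.
  have hyc : yv (cofY (flat y)) = y := yv_flat hY.
  apply/mapP; exists (cofY (flat y)); last by rewrite hyc.
  rewrite charSc //; apply/andP; split.
    by apply/eqP; apply: NN_of_S; rewrite ?hyc.
  by rewrite /Acl -cl_Y hY.
- move=> /mapP [c hc ->]; exists (yv c); split; first exact: scaled_xofy.
  move: hc; rewrite charSc // => /andP [/eqP hN hA].
  split.
    apply/dot_one; rewrite S1_yv S2_yv; move: hN; rewrite /NN => -[-> ->].
    split; last by rewrite mulr0.
    case: n hn => [//|n] _ /=.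
    by rewrite mulnS exprD (_ : (2 ^+ 2 : int) = 4).
  by apply/dotA_iff; rewrite bits_yv.
Qed.

Definition swi (i : 'I_4) : 'I_4 := match val i with 2 => o3 | 3 => o2 | _ => i end.
Lemma swiK : involutive swi.
Proof. by case=> [[|[|[|[|//]]]] H]; apply: val_inj. Qed.
Definition xsw (x : vec4) : vec4 := [ffun i => x (swi i)].
Definition ysw (y : zvec4) : zvec4 := [ffun i => y (swi i)].
Lemma xswK : involutive xsw.
Proof. by move=> x; apply/ffunP => i; rewrite !ffunE swiK. Qed.
Lemma yswK : involutive ysw.
Proof. by move=> x; apply/ffunP => i; rewrite !ffunE swiK. Qed.

Lemma scaled_sw n y x : scaled n y x -> scaled n (ysw y) (xsw x).
Proof. by move=> h i; rewrite !ffunE h. Qed.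

Lemma dot_sw x : dot (xsw x) (xsw x) = dot x x.
Proof.
rewrite /dot enum4 /= !ffunE /qt_add /=.
congr pair; ring.
Qed.

Definition swt (t : F4 * F4 * F4 * F4) : F4 * F4 * F4 * F4 :=
  let '(a, b, c, d) := t in (a, b, d, c).
Lemma swtK : involutive swt.
Proof. by case=> [[[a b] c] d]. Qed.
Lemma swt_A : Alist4' = map swt Alist4.
Proof. by []. Qed.

Lemma redv_sw y : tup4 (redv (ysw y)) = swt (tup4 (redv y)).
Proof. by rewrite /tup4 /redv !ffunE. Qed.

Lemma dotA'_sw y : dotA' (redv y) <-> dotA (redv (ysw y)).
Proof.
rewrite dotA'_iff dotA_iff redv_sw swt_A.
by rewrite -{1}(swtK (tup4 (redv y))) mem_map //; exact: can_inj swtK.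
Qed.

Lemma dotS'_iff n x : dotS' n x <-> dotS n (xsw x).
Proof.
split.
- move=> [y [hs [hd hA]]]; exists (ysw y); split; first exact: scaled_sw.
  by rewrite dot_sw; split => //; apply/dotA'_sw.
- move=> [y [hs [hd hA]]]; exists (ysw y); split.
    by rewrite -(xswK x); apply: scaled_sw.
  rewrite -dot_sw; split => //; apply/dotA'_sw; by rewrite yswK.
Qed.

Theorem mainTheorem7 (n : nat) (hn : (1 <= n)%N) :
  has_card (dotS n) (3 * 2 ^ (4 * n + 1))%N /\
  has_card (dotS' n) (3 * 2 ^ (4 * n + 1))%N.
Proof.
set s := map (fun c => xofy n (yv c)) (Sc n).
have us : uniq s.
  by rewrite map_inj_uniq ?uniq_Sc // => c d /xofy_inj /yv_inj.
have ss : size s = (3 * 2 ^ (4 * n + 1))%N by rewrite size_map size_Sc.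
split.
- exists s; split => //; split => // x; exact: dotS_iff.
- exists (map xsw s); split.
    by rewrite map_inj_uniq //; exact: can_inj xswK.
  split; last by rewrite size_map.
  move=> x; rewrite dotS'_iff dotS_iff // -/s.
  by rewrite -{2}(xswK x) mem_map //; exact: can_inj xswK.
Qed.
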